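(* Assume Hypotheses 1, 2 and 3 (see context), and let $h:K\to\mathbb{R}^n$ be the function with $\Gamma=\{(h(z),z):z\in K\}$. Then $h$ is differentiable at every $z\in K$, and $Dh(z)=H(h(z),z)$ for all $z\in K$.
   Context: System $\dot x=F(x)$ with $F=(f,g)$, i.e. $\dot a=f(a,z)$, $\dot z=g(a,z)$, $(a,z)\in\mathbb{R}^n\times\mathbb{R}^m$, $X=\mathbb{R}^n\times\mathbb{R}^m$, flow $\Phi(t,x)$. Euclidean inner product, norm, operator norm. $\mathcal{L}(x_1,x_2)=\|a_2-a_1\|^2-\|z_2-z_1\|^2$, $\mathcal{C}(x)=\{x'\in X:\mathcal{L}(x',x)\ge0\}$, $\mathbf{0}$ the zero vector of $X$; $\Pi(a,z)=a$, $\Pi_\perp(a,z)=z$; $\mathbb{B}_d(x)=\{(a',z'):\|a'-a\|\le d,\|z'-z\|\le d\}$. $\Gamma\subseteq U$ positively invariant means $\Phi(t,x)$ is defined for all $t\ge0$ for $x\in\Gamma$ and $\Phi(t,\Gamma)\subseteq\Gamma$. Hypothesis 1: $U$ open and convex, and there is $d>0$ with $\mathcal{C}(x)\cap U\subset\mathbb{B}_d(x)$ for all $x\in U$. Hypothesis 2: $f,g$ are $C^1$ on $U$; there exist continuous $\alpha>0$, $\ell\ge0$ on $U$ and $c_1>0$ with, for all $x\in U$: $\langle a',D_af(x)a'\rangle\ge\alpha(x)\|a'\|^2$; $\langle z',D_zg(x)z'\rangle\le\ell(x)\|z'\|^2$; $\alpha(x)\ge\ell(x)+\|D_zf(x)\|+\|D_ag(x)\|+c_1$.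 Hypothesis 3: $\Gamma\subset U$ is positively invariant and $\Pi_\perp(\Gamma)=\Pi_\perp(U)$. Let $K:=\Pi_\perp(U)$; under these hypotheses $\Gamma$ is the graph of a function $h:K\to\mathbb{R}^n$ with $\|h(z_2)-h(z_1)\|<\|z_2-z_1\|$ for $z_1\ne z_2$. For $x\in\Gamma$, $Q(t,x)$ ($t\ge0$) denotes the fundamental matrix solution of $\dot{\mathbf{x}}=DF(\Phi(t,x))\mathbf{x}$ with $Q(0,x)=I$, and $T(x):=\{\mathbf{x}\in X: \mathcal{L}(Q(t,x)\mathbf{x},\mathbf{0})\le0\text{ for all }t\ge0\}$. Under these hypotheses each $T(x)$ is the graph of a unique linear map $H(x):\mathbb{R}^m\to\mathbb{R}^n$, i.e. $T(x)=\{(H(x)\mathbf{z},\mathbf{z}):\mathbf{z}\in\mathbb{R}^m\}$. *)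

(* Defs.v *)
From Stdlib Require Fin.
From Stdlib Require Import Reals Lra ClassicalEpsilon.
Open Scope R_scope.

Definition vec (n : nat) := Fin.t n -> R.
Definition mat (k n : nat) := Fin.t k -> Fin.t n -> R.

Fixpoint vsum (n : nat) : (Fin.t n -> R) -> R :=
  match n return (Fin.t n -> R) -> R with
  | O => fun _ => 0
  | S k => fun f => f Fin.F1 + vsum k (fun i => f (Fin.FS i))
  end.

Definition vzero {n} : vec n := fun _ => 0.
Definition vadd {n} (u v : vec n) : vec n := fun i => u i + v i.
Definition vsub {n} (u v : vec n) : vec n := fun i => u i - v i.
Definition vscale {n} (c : R) (u : vec n) : vec n := fun i => c * u i.
Definition inner {n} (u v : vec n) : R := vsum n (fun i => u i * v i).
Definition vnorm {n} (u : vec n) : R := sqrt (inner u u).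
Definition mapply {k n} (M : mat k n) (v : vec n) : vec k :=
  fun i => vsum n (fun j => M i j * v j).

Definition opnorm {k n} (M : mat k n) : R :=
  epsilon (inhabits 0)
    (fun r => is_lub (fun y => exists v : vec n, vnorm v <= 1 /\ y = vnorm (mapply M v)) r).

Definition X (n m : nat) := (vec n * vec m)%type.
Definition Xadd {n m} (x y : X n m) : X n m := (vadd (fst x) (fst y), vadd (snd x) (snd y)).
Definition Xsub {n m} (x y : X n m) : X n m := (vsub (fst x) (fst y), vsub (snd x) (snd y)).
Definition Xscale {n m} (c : R) (x : X n m) : X n m := (vscale c (fst x), vscale c (snd x)).
Definition Xzero {n m} : X n m := (vzero, vzero).
Definition Xnorm {n m} (x : X n m) : R :=
  sqrt (inner (fst x) (fst x) + inner (snd x) (snd x)).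

Definition Lf {n m} (x1 x2 : X n m) : R :=
  vnorm (vsub (fst x2) (fst x1)) ^ 2 - vnorm (vsub (snd x2) (snd x1)) ^ 2.
Definition Ccone {n m} (x : X n m) (x' : X n m) : Prop := Lf x' x >= 0.
Definition Bbox {n m} (d : R) (x : X n m) (x' : X n m) : Prop :=
  vnorm (vsub (fst x') (fst x)) <= d /\ vnorm (vsub (snd x') (snd x)) <= d.

Definition is_open {n m} (U : X n m -> Prop) : Prop :=
  forall x, U x -> exists r, r > 0 /\ forall y, Xnorm (Xsub y x) < r -> U y.
Definition is_convex {n m} (U : X n m -> Prop) : Prop :=
  forall x y s, U x -> U y -> 0 <= s <= 1 -> U (Xadd (Xscale (1 - s) x) (Xscale s y)).

Definition cont_on {n m} (U : X n m -> Prop) (phi : X n m -> R) : Prop :=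
  forall x, U x -> forall eps, eps > 0 -> exists del, del > 0 /\
    forall y, U y -> Xnorm (Xsub y x) < del -> Rabs (phi y - phi x) < eps.
Definition mcont_on {n m k l} (U : X n m -> Prop) (M : X n m -> mat k l) : Prop :=
  forall i j, cont_on U (fun x => M x i j).

(* Frechet derivative of phi : X -> R^k at x is the linear map
   (u_a,u_z) |-> A u_a + B u_z, i.e. D_a phi(x) = A, D_z phi(x) = B *)
Definition has_partials {n m k} (phi : X n m -> vec k) (x : X n m)
    (A : mat k n) (B : mat k m) : Prop :=
  forall eps, eps > 0 -> exists del, del > 0 /\ forall u : X n m, Xnorm u < del ->
    vnorm (vsub (vsub (phi (Xadd x u)) (phi x))
                (vadd (mapply A (fst u)) (mapply B (snd u)))) <= eps * Xnorm u.

Definition frechet_deriv {m n} (h : vec m -> vec n) (z : vec m) (M : mat n m) : Prop :=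
  forall eps, eps > 0 -> exists del, del > 0 /\ forall w : vec m, vnorm w < del ->
    vnorm (vsub (vsub (h (vadd z w)) (h z)) (mapply M w)) <= eps * vnorm w.

Definition curve_deriv {n m} (gamma : R -> X n m) (t : R) (v : X n m) : Prop :=
  forall eps, eps > 0 -> exists del, del > 0 /\ forall s, s >= 0 -> Rabs (s - t) < del ->
    Xnorm (Xsub (Xsub (gamma s) (gamma t)) (Xscale (s - t) v)) <= eps * Rabs (s - t).

Definition forward_solution {n m} (f : X n m -> vec n) (g : X n m -> vec m)
    (x0 : X n m) (phi : R -> X n m) : Prop :=
  phi 0 = x0 /\ forall t, t >= 0 -> curve_deriv phi t (f (phi t), g (phi t)).

(* Gamma positively invariant: for x in Gamma, the flow Phi(t,x) exists for
   all t >= 0 and stays in Gamma (the forward solution is unique since F is C^1 on U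
   and Gamma is a subset of U) *)
Definition pos_invariant {n m} (f : X n m -> vec n) (g : X n m -> vec m)
    (Gam : X n m -> Prop) : Prop :=
  forall x, Gam x -> exists phi, forward_solution f g x phi /\ forall t, t >= 0 -> Gam (phi t).

Definition DF_apply {n m} (fa : X n m -> mat n n) (fz : X n m -> mat n m)
    (ga : X n m -> mat m n) (gz : X n m -> mat m m) (x : X n m) (v : X n m) : X n m :=
  (vadd (mapply (fa x) (fst v)) (mapply (fz x) (snd v)),
   vadd (mapply (ga x) (fst v)) (mapply (gz x) (snd v))).

(* T(x) = { v : L(Q(t,x) v, 0) <= 0 for all t >= 0 }, where Q(t,x) v is the solution y
   of the variational equation y' = DF(Phi(t,x)) y, y(0) = v, along the trajectory *)
Definition in_T {n m} (f : X n m -> vec n) (g : X n m -> vec m)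
    (fa : X n m -> mat n n) (fz : X n m -> mat n m)
    (ga : X n m -> mat m n) (gz : X n m -> mat m m) (x : X n m) (v : X n m) : Prop :=
  forall phi : R -> X n m, forward_solution f g x phi ->
  forall y : R -> X n m, y 0 = v ->
    (forall t, t >= 0 -> curve_deriv y t (DF_apply fa fz ga gz (phi t) (y t))) ->
    forall t, t >= 0 -> Lf (y t) Xzero <= 0.

(* Main.v *)
Require Import Defs.
From Stdlib Require Import Reals Lra Psatz Classical ClassicalEpsilon FunctionalExtensionality Lia.
Open Scope R_scope.


Lemma vsum_ext n (f g : Fin.t n -> R) : (forall i, f i = g i) -> vsum n f = vsum n g.
Proof. induction n; simpl; intros H; [reflexivity|]. rewrite H, (IHn (fun i => f (Fin.FS i)) (fun i => g (Fin.FS i))); auto. Qed.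
Lemma vsum_add n (f g : Fin.t n -> R) : vsum n (fun i => f i + g i) = vsum n f + vsum n g.
Proof. induction n; simpl; [lra|]. rewrite (IHn (fun i => f (Fin.FS i)) (fun i => g (Fin.FS i))); lra. Qed.
Lemma vsum_scale n c (f : Fin.t n -> R) : vsum n (fun i => c * f i) = c * vsum n f.
Proof. induction n; simpl; [lra|]. rewrite (IHn (fun i => f (Fin.FS i))); lra. Qed.
Lemma vsum_sub n (f g : Fin.t n -> R) : vsum n (fun i => f i - g i) = vsum n f - vsum n g.
Proof. replace (vsum n f - vsum n g) with (vsum n f + (-1) * vsum n g) by ring. rewrite <- vsum_scale, <- vsum_add. apply vsum_ext; intros; ring. Qed.
Lemma vsum_le n (f g : Fin.t n -> R) : (forall i, f i <= g i) -> vsum n f <= vsum n g.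
Proof. induction n; simpl; intros H; [lra|]. assert (forall i, f (Fin.FS i) <= g (Fin.FS i)) by auto. specialize (IHn (fun i => f (Fin.FS i)) (fun i => g (Fin.FS i)) H0). specialize (H Fin.F1). lra. Qed.
Lemma vsum_const n c : vsum n (fun _ => c) = INR n * c.
Proof. induction n; simpl vsum; [simpl; lra|]. rewrite IHn, S_INR; lra. Qed.
Lemma vsum_nonneg n (f : Fin.t n -> R) : (forall i, 0 <= f i) -> 0 <= vsum n f.
Proof. intros H. rewrite <- (Rmult_0_r (INR n)), <- vsum_const. apply vsum_le; auto. Qed.
Lemma vsum_abs n (f : Fin.t n -> R) : Rabs (vsum n f) <= vsum n (fun i => Rabs (f i)).
Proof. induction n; simpl; [rewrite Rabs_R0; lra|]. specialize (IHn (fun i => f (Fin.FS i))). pose proof (Rabs_triang (f Fin.F1) (vsum n (fun i => f (Fin.FS i)))). lra. Qed.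
Lemma vsum_term n (f : Fin.t n -> R) i : (forall j, 0 <= f j) -> f i <= vsum n f.
Proof. induction n; intros H. - inversion i. - revert f H; pattern i; apply Fin.caseS'; simpl; [intros f H|intros p f H].
  + pose proof (vsum_nonneg n (fun i => f (Fin.FS i))). assert (forall i, 0 <= f (Fin.FS i)) by auto. specialize (H0 H1). lra.
  + specialize (IHn (fun i => f (Fin.FS i)) p). simpl in IHn. pose proof (H Fin.F1). assert (forall j, 0 <= f (Fin.FS j)) by auto. specialize (IHn H1). lra. Qed.
Lemma vsum_zero_each n (f : Fin.t n -> R) : (forall j, 0 <= f j) -> vsum n f = 0 -> forall i, f i = 0.
Proof. intros H H0 i. pose proof (vsum_term n f i H). specialize (H i). lra. Qed.

Lemma inner_comm n (u v : vec n) : inner u v = inner v u.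
Proof. unfold inner; apply vsum_ext; intros; ring. Qed.
Lemma inner_addl n (u v w : vec n) : inner (vadd u v) w = inner u w + inner v w.
Proof. unfold inner, vadd. rewrite <- vsum_add. apply vsum_ext; intros; ring. Qed.
Lemma inner_addr n (u v w : vec n) : inner w (vadd u v) = inner w u + inner w v.
Proof. unfold inner, vadd. rewrite <- vsum_add. apply vsum_ext; intros; ring. Qed.
Lemma inner_subl n (u v w : vec n) : inner (vsub u v) w = inner u w - inner v w.
Proof. unfold inner, vsub. rewrite <- vsum_sub. apply vsum_ext; intros; ring. Qed.
Lemma inner_subr n (u v w : vec n) : inner w (vsub u v) = inner w u - inner w v.
Proof. rewrite inner_comm, inner_subl, (inner_comm _ u), (inner_comm _ v); auto. Qed.
Lemma inner_scalel n c (u w : vec n) : inner (vscale c u) w = c * inner u w.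
Proof. unfold inner, vscale. rewrite <- vsum_scale. apply vsum_ext; intros; ring. Qed.
Lemma inner_scaler n c (u w : vec n) : inner w (vscale c u) = c * inner w u.
Proof. unfold inner, vscale. rewrite <- vsum_scale. apply vsum_ext; intros; ring. Qed.
Lemma inner_zerol n (w : vec n) : inner vzero w = 0.
Proof. unfold inner, vzero. rewrite (vsum_ext n _ (fun _ => 0)) by (intros; ring). rewrite vsum_const; ring. Qed.
Lemma inner_pos n (u : vec n) : 0 <= inner u u.
Proof. apply vsum_nonneg; intros; nra. Qed.
Lemma inner_zero_each n (u : vec n) : inner u u = 0 -> forall i, u i = 0.
Proof. intros H i. pose proof (vsum_zero_each n (fun i => u i * u i) ltac:(intros; nra) H i). simpl in H0. nra. Qed.

Lemma cs_abstract aa ab bb : 0 <= bb -> (forall t, 0 <= aa - 2 * t * ab + t * t * bb) -> ab * ab <= aa * bb.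
Proof. intros Hbb H. destruct (Req_dec bb 0) as [Hb|Hb].
  - destruct (Req_dec ab 0). + subst. pose proof (H 0). nra.
    + exfalso. pose proof (H ((aa+1)/(2*ab))). subst bb. assert (2 * ((aa+1)/(2*ab)) * ab = aa + 1) by (field; auto). lra.
  - assert (bb > 0) by lra.
    pose proof (H (ab / bb)). assert (ab/bb*ab/bb*bb = ab*ab/bb) by (field; lra).
    assert (aa - 2 * (ab/bb)*ab + ab/bb*ab/bb*bb = (aa*bb - ab*ab)/bb) by (field; lra).
    replace (aa - 2 * (ab / bb) * ab + ab / bb * ab / bb * bb) with (aa - 2 * (ab / bb) * ab + ab / bb * (ab / bb) * bb) in H3 by (unfold Rdiv; ring).
    rewrite H3 in H1. apply Rmult_le_compat_r with (r := bb) in H1; [|lra]. unfold Rdiv in H1. rewrite Rmult_assoc, Rinv_l in H1; lra. Qed.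

Lemma sqrt_cs aa ab bb : 0 <= aa -> 0 <= bb -> ab * ab <= aa * bb -> Rabs ab <= sqrt aa * sqrt bb.
Proof. intros. rewrite <- sqrt_mult by auto. rewrite <- sqrt_Rsqr_abs. apply sqrt_le_1; [apply Rle_0_sqr|nra|unfold Rsqr; auto]. Qed.

Lemma vnorm_sq n (u : vec n) : vnorm u * vnorm u = inner u u.
Proof. unfold vnorm. apply sqrt_sqrt, inner_pos. Qed.
Lemma vnorm_pos n (u : vec n) : 0 <= vnorm u.
Proof. apply sqrt_pos. Qed.
Lemma vnorm_pow2 n (u : vec n) : vnorm u ^ 2 = inner u u.
Proof. rewrite <- vnorm_sq; ring. Qed.

Lemma cs n (u v : vec n) : Rabs (inner u v) <= vnorm u * vnorm v.
Proof. apply sqrt_cs; try apply inner_pos. apply cs_abstract. apply inner_pos. intros t.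
  pose proof (inner_pos n (vsub u (vscale t v))).
  rewrite inner_subl, !inner_subr, !inner_scalel, !inner_scaler, (inner_comm _ v u) in H. lra. Qed.
Lemma cs' n (u v : vec n) : inner u v <= vnorm u * vnorm v.
Proof. pose proof (cs n u v). pose proof (Rle_abs (inner u v)). lra. Qed.
Lemma cs'' n (u v : vec n) : - (vnorm u * vnorm v) <= inner u v.
Proof. pose proof (cs n u v). pose proof (Rle_abs (- inner u v)). rewrite Rabs_Ropp in H0. lra. Qed.

Lemma le_of_sq a b : 0 <= b -> a * a <= b * b -> a <= b.
Proof. intros. destruct (Rle_dec a b); auto. nra. Qed.

Lemma vnorm_add n (u v : vec n) : vnorm (vadd u v) <= vnorm u + vnorm v.
Proof. apply le_of_sq. pose proof (vnorm_pos n u); pose proof (vnorm_pos n v); lra.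
  rewrite vnorm_sq, inner_addl, !inner_addr. rewrite (inner_comm _ v u).
  pose proof (cs' n u v). pose proof (vnorm_sq n u). pose proof (vnorm_sq n v). nra. Qed.
Lemma vnorm_scale n c (u : vec n) : vnorm (vscale c u) = Rabs c * vnorm u.
Proof. unfold vnorm. rewrite inner_scalel, inner_scaler, <- Rmult_assoc, sqrt_mult.
  - f_equal. rewrite <- sqrt_Rsqr_abs. unfold Rsqr. auto.
  - nra. - apply inner_pos. Qed.
Lemma vnorm_zero_each n (u : vec n) : vnorm u = 0 -> forall i, u i = 0.
Proof. intros. apply inner_zero_each. rewrite <- vnorm_sq, H. ring. Qed.
Lemma vnorm_coord n (u : vec n) i : Rabs (u i) <= vnorm u.
Proof. apply le_of_sq; [apply vnorm_pos|]. rewrite vnorm_sq. rewrite <- Rabs_mult, Rabs_pos_eq by nra.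
  apply (vsum_term n (fun i => u i * u i)). intros; nra. Qed.
Lemma vnorm_le_sum n (u : vec n) : vnorm u <= vsum n (fun i => Rabs (u i)).
Proof. apply le_of_sq. apply vsum_nonneg; intros; apply Rabs_pos. rewrite vnorm_sq. unfold inner.
  induction n; simpl; [lra|]. specialize (IHn (fun i => u (Fin.FS i))). simpl in IHn.
  pose proof (vsum_nonneg n (fun i => Rabs (u (Fin.FS i))) ltac:(intros; apply Rabs_pos)).
  pose proof (Rabs_pos (u Fin.F1)). assert (u Fin.F1 * u Fin.F1 = Rabs (u Fin.F1) * Rabs (u Fin.F1)) by (rewrite <- Rabs_mult, Rabs_pos_eq; nra). nra. Qed.


Ltac vext := let i := fresh "i" in apply functional_extensionality; intro i; unfold vadd, vsub, vscale, vzero; simpl.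
Ltac Xext := unfold Xadd, Xsub, Xscale, Xzero; apply injective_projections; simpl; vext; try ring.

Definition Wq {n m} (s : R) (x y : X n m) : R := inner (fst x) (fst y) + s * inner (snd x) (snd y).

Lemma Wq_sym n m s (x y : X n m) : Wq s x y = Wq s y x.
Proof. unfold Wq; rewrite (inner_comm _ (fst x)), (inner_comm _ (snd x)); auto. Qed.
Lemma Wq_addl n m s (x y z : X n m) : Wq s (Xadd x y) z = Wq s x z + Wq s y z.
Proof. unfold Wq, Xadd; simpl. rewrite !inner_addl; ring. Qed.
Lemma Wq_subl n m s (x y z : X n m) : Wq s (Xsub x y) z = Wq s x z - Wq s y z.
Proof. unfold Wq, Xsub; simpl. rewrite !inner_subl; ring. Qed.
Lemma Wq_scalel n m s c (x z : X n m) : Wq s (Xscale c x) z = c * Wq s x z.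
Proof. unfold Wq, Xscale; simpl. rewrite !inner_scalel; ring. Qed.
Lemma Wq_addr n m s (x y z : X n m) : Wq s z (Xadd x y) = Wq s z x + Wq s z y.
Proof. rewrite !(Wq_sym _ _ _ z). apply Wq_addl. Qed.
Lemma Wq_subr n m s (x y z : X n m) : Wq s z (Xsub x y) = Wq s z x - Wq s z y.
Proof. rewrite !(Wq_sym _ _ _ z). apply Wq_subl. Qed.
Lemma Wq_scaler n m s c (x z : X n m) : Wq s z (Xscale c x) = c * Wq s z x.
Proof. rewrite !(Wq_sym _ _ _ z). apply Wq_scalel. Qed.

Lemma Xnorm_sq n m (x : X n m) : Xnorm x * Xnorm x = Wq 1 x x.
Proof. unfold Xnorm, Wq. rewrite Rmult_1_l. apply sqrt_sqrt. pose proof (inner_pos _ (fst x)); pose proof (inner_pos _ (snd x)); lra. Qed.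
Lemma Xnorm_pos n m (x : X n m) : 0 <= Xnorm x.
Proof. apply sqrt_pos. Qed.
Lemma Xnorm_fst n m (x : X n m) : vnorm (fst x) <= Xnorm x.
Proof. apply le_of_sq; [apply Xnorm_pos|]. rewrite Xnorm_sq, vnorm_sq. unfold Wq. pose proof (inner_pos _ (snd x)); lra. Qed.
Lemma Xnorm_snd n m (x : X n m) : vnorm (snd x) <= Xnorm x.
Proof. apply le_of_sq; [apply Xnorm_pos|]. rewrite Xnorm_sq, vnorm_sq. unfold Wq. pose proof (inner_pos _ (fst x)); lra. Qed.
Lemma Xnorm_le n m (x : X n m) : Xnorm x <= vnorm (fst x) + vnorm (snd x).
Proof. apply le_of_sq. pose proof (vnorm_pos _ (fst x)); pose proof (vnorm_pos _ (snd x)); lra.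
  rewrite Xnorm_sq. unfold Wq. rewrite <- !vnorm_sq. pose proof (vnorm_pos _ (fst x)); pose proof (vnorm_pos _ (snd x)); nra. Qed.
Lemma Xnorm_pair n m (a : vec n) (z : vec m) : Xnorm (a, z) * Xnorm (a, z) = vnorm a * vnorm a + vnorm z * vnorm z.
Proof. rewrite Xnorm_sq, !vnorm_sq. unfold Wq; simpl; ring. Qed.

Lemma Wq_cs n m s (x y : X n m) : -1 <= s <= 1 -> Rabs (Wq s x y) <= Xnorm x * Xnorm y.
Proof. intros Hs. unfold Wq. pose proof (cs _ (fst x) (fst y)). pose proof (cs _ (snd x) (snd y)).
  apply Rle_trans with (vnorm (fst x) * vnorm (fst y) + vnorm (snd x) * vnorm (snd y)).
  - eapply Rle_trans. apply Rabs_triang. rewrite Rabs_mult. assert (Rabs s <= 1) by (apply Rabs_le; lra).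
    pose proof (Rabs_pos (inner (snd x) (snd y))). nra.
  - apply le_of_sq. apply Rmult_le_pos; apply Xnorm_pos.
    destruct x as [a z]; destruct y as [b w]; simpl.
    replace (Xnorm (a, z) * Xnorm (b, w) * (Xnorm (a, z) * Xnorm (b, w))) with ((Xnorm (a, z) * Xnorm (a, z)) * (Xnorm (b, w) * Xnorm (b, w))) by ring.
    rewrite !Xnorm_pair. pose proof (vnorm_pos _ a). pose proof (vnorm_pos _ b). pose proof (vnorm_pos _ z). pose proof (vnorm_pos _ w).
    pose proof (Rle_0_sqr (vnorm a * vnorm w - vnorm z * vnorm b)). unfold Rsqr in *. nra. Qed.
Lemma Wq_cs' n m s (x y : X n m) : -1 <= s <= 1 -> Wq s x y <= Xnorm x * Xnorm y.
Proof. intros. pose proof (Wq_cs n m s x y H). pose proof (Rle_abs (Wq s x y)). lra. Qed.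
Lemma Wq_cs'' n m s (x y : X n m) : -1 <= s <= 1 -> - (Xnorm x * Xnorm y) <= Wq s x y.
Proof. intros. pose proof (Wq_cs n m s x y H). pose proof (Rle_abs (- Wq s x y)). rewrite Rabs_Ropp in H1. lra. Qed.

Lemma Xnorm_add n m (x y : X n m) : Xnorm (Xadd x y) <= Xnorm x + Xnorm y.
Proof. apply le_of_sq. pose proof (Xnorm_pos _ _ x); pose proof (Xnorm_pos _ _ y); lra.
  rewrite Xnorm_sq, Wq_addl, !Wq_addr. rewrite (Wq_sym _ _ _ y x).
  pose proof (Wq_cs' n m 1 x y ltac:(lra)). pose proof (Xnorm_sq n m x). pose proof (Xnorm_sq n m y). nra. Qed.
Lemma Xnorm_scale n m c (x : X n m) : Xnorm (Xscale c x) = Rabs c * Xnorm x.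
Proof. apply Rsqr_inj. apply Xnorm_pos. pose proof (Rabs_pos c); pose proof (Xnorm_pos _ _ x); nra.
  unfold Rsqr. rewrite Xnorm_sq, Wq_scalel, Wq_scaler.
  replace (Rabs c * Xnorm x * (Rabs c * Xnorm x)) with ((Rabs c * Rabs c) * (Xnorm x * Xnorm x)) by ring.
  rewrite <- Rabs_mult, Rabs_pos_eq by nra. rewrite Xnorm_sq; ring. Qed.
Lemma Xnorm_sub_sym n m (x y : X n m) : Xnorm (Xsub x y) = Xnorm (Xsub y x).
Proof. replace (Xsub x y) with (Xscale (-1) (Xsub y x)) by Xext. rewrite Xnorm_scale, (Rabs_left (-1)) by lra; ring. Qed.
Lemma Xnorm_sub n m (x y : X n m) : Xnorm (Xsub x y) <= Xnorm x + Xnorm y.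
Proof. replace (Xsub x y) with (Xadd x (Xscale (-1) y)) by Xext. eapply Rle_trans. apply Xnorm_add.
  rewrite Xnorm_scale, (Rabs_left (-1)) by lra; lra. Qed.
Lemma Xnorm_tri n m (x y z : X n m) : Xnorm (Xsub x z) <= Xnorm (Xsub x y) + Xnorm (Xsub y z).
Proof. replace (Xsub x z) with (Xadd (Xsub x y) (Xsub y z)) by Xext. apply Xnorm_add. Qed.
Lemma Xnorm_zero_eq n m (x : X n m) : Xnorm x = 0 -> x = Xzero.
Proof. intros H. destruct x as [a z]. pose proof (Xnorm_fst _ _ (a,z)). pose proof (Xnorm_snd _ _ (a,z)). simpl in *.
  pose proof (vnorm_pos _ a). pose proof (vnorm_pos _ z).
  assert (vnorm a = 0) by lra. assert (vnorm z = 0) by lra.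
  unfold Xzero; f_equal; vext; [apply (vnorm_zero_each _ a)|apply (vnorm_zero_each _ z)]; auto. Qed.
Lemma Xnorm_Xzero n m : Xnorm (@Xzero n m) = 0.
Proof. unfold Xnorm, Xzero; simpl. rewrite !inner_zerol, Rplus_0_r. apply sqrt_0. Qed.
Lemma vnorm_vzero n : vnorm (@vzero n) = 0.
Proof. unfold vnorm. rewrite inner_zerol. apply sqrt_0. Qed.

Definition msum {k n} (M : mat k n) : R := vsum k (fun i => vsum n (fun j => Rabs (M i j))).
Definition msub {k n} (M N : mat k n) : mat k n := fun i j => M i j - N i j.
Lemma msum_pos k n (M : mat k n) : 0 <= msum M.
Proof. apply vsum_nonneg; intros; apply vsum_nonneg; intros; apply Rabs_pos. Qed.
Lemma mapply_bound k n (M : mat k n) v : vnorm (mapply M v) <= msum M * vnorm v.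
Proof. eapply Rle_trans. apply vnorm_le_sum. unfold msum. rewrite Rmult_comm, <- vsum_scale. apply vsum_le; intros i.
  unfold mapply. eapply Rle_trans. apply vsum_abs. rewrite <- vsum_scale. apply vsum_le; intros j.
  rewrite Rabs_mult. pose proof (vnorm_coord _ v j). pose proof (Rabs_pos (M i j)). nra. Qed.
Lemma mapply_add k n (M : mat k n) u v : mapply M (vadd u v) = vadd (mapply M u) (mapply M v).
Proof. vext. unfold mapply. rewrite <- vsum_add. apply vsum_ext; intros; unfold vadd; ring. Qed.
Lemma mapply_sub k n (M : mat k n) u v : mapply M (vsub u v) = vsub (mapply M u) (mapply M v).
Proof. vext. unfold mapply. rewrite <- vsum_sub. apply vsum_ext; intros; unfold vsub; ring. Qed.
Lemma mapply_scale k n (M : mat k n) c u : mapply M (vscale c u) = vscale c (mapply M u).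
Proof. vext. unfold mapply. rewrite <- vsum_scale. apply vsum_ext; intros; unfold vscale; ring. Qed.
Lemma mapply_msub k n (M N : mat k n) u : mapply (msub M N) u = vsub (mapply M u) (mapply N u).
Proof. vext. unfold mapply. rewrite <- vsum_sub. apply vsum_ext; intros; unfold msub; ring. Qed.
Lemma mapply_zero k n (M : mat k n) : mapply M vzero = vzero.
Proof. vext. unfold mapply. rewrite (vsum_ext n _ (fun _ => 0)) by (intros; unfold vzero; ring). rewrite vsum_const; ring. Qed.
Lemma msum_tri k n (A B C : mat k n) : msum (msub A C) <= msum (msub A B) + msum (msub B C).
Proof. unfold msum. rewrite <- vsum_add. apply vsum_le; intros i. rewrite <- vsum_add. apply vsum_le; intros j.
  unfold msub. replace (A i j - C i j) with ((A i j - B i j) + (B i j - C i j)) by ring. apply Rabs_triang. Qed.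
Lemma msum_le k n (A B : mat k n) : msum A <= msum B + msum (msub A B).
Proof. unfold msum. rewrite <- vsum_add. apply vsum_le; intros i. rewrite <- vsum_add. apply vsum_le; intros j.
  unfold msub. replace (A i j) with (B i j + (A i j - B i j)) at 1 by ring. apply Rabs_triang. Qed.
Lemma msum_msub_sym k n (A B : mat k n) : msum (msub A B) = msum (msub B A).
Proof. unfold msum, msub. apply vsum_ext; intros; apply vsum_ext; intros. rewrite <- Rabs_Ropp. f_equal; ring. Qed.
Lemma msum_msub_self k n (A : mat k n) : msum (msub A A) = 0.
Proof. unfold msum, msub. rewrite (vsum_ext k _ (fun _ => 0)). rewrite vsum_const; ring.
  intros. rewrite (vsum_ext n _ (fun _ => 0)). rewrite vsum_const; ring. intros. replace (A i i0 - A i i0) with 0 by ring. apply Rabs_R0. Qed.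

Definition Blk {n m} (A : mat n n) (B : mat n m) (C : mat m n) (D : mat m m) (v : X n m) : X n m :=
  (vadd (mapply A (fst v)) (mapply B (snd v)), vadd (mapply C (fst v)) (mapply D (snd v))).
Lemma Blk_bound n m A B C D (v : X n m) : Xnorm (Blk A B C D v) <= (msum A + msum B + msum C + msum D) * Xnorm v.
Proof. eapply Rle_trans. apply Xnorm_le. unfold Blk; simpl.
  pose proof (vnorm_add _ (mapply A (fst v)) (mapply B (snd v))). pose proof (vnorm_add _ (mapply C (fst v)) (mapply D (snd v))).
  pose proof (mapply_bound _ _ A (fst v)). pose proof (mapply_bound _ _ B (snd v)). pose proof (mapply_bound _ _ C (fst v)). pose proof (mapply_bound _ _ D (snd v)).
  pose proof (Xnorm_fst _ _ v). pose proof (Xnorm_snd _ _ v). pose proof (msum_pos _ _ A). pose proof (msum_pos _ _ B). pose proof (msum_pos _ _ C). pose proof (msum_pos _ _ D).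
  nra. Qed.
Lemma Blk_sub n m A B C D A' B' C' D' (v : X n m) :
  Xsub (Blk A B C D v) (Blk A' B' C' D' v) = Blk (msub A A') (msub B B') (msub C C') (msub D D') v.
Proof. unfold Blk, Xsub; simpl. rewrite !mapply_msub. f_equal; vext; ring. Qed.
Lemma Blk_lin n m A B C D (u v : X n m) a b :
  Blk A B C D (Xadd (Xscale a u) (Xscale b v)) = Xadd (Xscale a (Blk A B C D u)) (Xscale b (Blk A B C D v)).
Proof. unfold Blk, Xadd, Xscale; simpl. rewrite !mapply_add, !mapply_scale. f_equal; vext; ring. Qed.
Lemma Blk_subv n m A B C D (u v : X n m) : Blk A B C D (Xsub u v) = Xsub (Blk A B C D u) (Blk A B C D v).
Proof. unfold Blk, Xsub; simpl. rewrite !mapply_sub. f_equal; vext; ring. Qed.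
Lemma Blk_scale n m A B C D (u : X n m) c : Blk A B C D (Xscale c u) = Xscale c (Blk A B C D u).
Proof. unfold Blk, Xscale; simpl. rewrite !mapply_scale. f_equal; vext; ring. Qed.


Lemma vnorm_zero_vec n (v : vec n) : vnorm v = 0 -> v = vzero.
Proof. intros H. vext. apply vnorm_zero_each; auto. Qed.

Lemma opnorm_spec k n (M : mat k n) :
  is_lub (fun y => exists v : vec n, vnorm v <= 1 /\ y = vnorm (mapply M v)) (opnorm M).
Proof. unfold opnorm. apply epsilon_spec.
  destruct (completeness (fun y => exists v : vec n, vnorm v <= 1 /\ y = vnorm (mapply M v))) as [r Hr].
  - exists (msum M). intros y [v [Hv ->]]. pose proof (mapply_bound _ _ M v). pose proof (msum_pos _ _ M). pose proof (vnorm_pos _ v). nra.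
  - exists (vnorm (mapply M vzero)), vzero. split; auto. rewrite vnorm_vzero; lra.
  - exists r; auto. Qed.
Lemma opnorm_pos k n (M : mat k n) : 0 <= opnorm M.
Proof. destruct (opnorm_spec k n M) as [H _]. apply H. exists vzero. rewrite mapply_zero, !vnorm_vzero. split; lra. Qed.
Lemma opnorm_bound k n (M : mat k n) v : vnorm (mapply M v) <= opnorm M * vnorm v.
Proof. destruct (Req_dec (vnorm v) 0) as [H0|H0].
  - apply vnorm_zero_vec in H0. subst. rewrite mapply_zero, !vnorm_vzero; lra.
  - pose proof (vnorm_pos _ v). destruct (opnorm_spec k n M) as [HH _].
    assert (H2 : vnorm (mapply M (vscale (/ vnorm v) v)) <= opnorm M).
    { apply HH. eexists; split; [|reflexivity]. rewrite vnorm_scale, Rabs_pos_eq. rewrite Rinv_l; lra.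
      apply Rlt_le, Rinv_0_lt_compat; lra. }
    rewrite mapply_scale, vnorm_scale, Rabs_pos_eq in H2. 2: apply Rlt_le, Rinv_0_lt_compat; lra.
    apply Rmult_le_compat_r with (r := vnorm v) in H2; [|lra]. rewrite Rmult_comm, <- Rmult_assoc, Rinv_r in H2; lra. Qed.
Lemma inner_op_ge k n (M : mat k n) (a : vec k) z : - (opnorm M * vnorm a * vnorm z) <= inner a (mapply M z).
Proof. pose proof (cs'' _ a (mapply M z)). pose proof (opnorm_bound _ _ M z). pose proof (vnorm_pos _ a). nra. Qed.
Lemma inner_op_le k n (M : mat k n) (a : vec k) z : inner a (mapply M z) <= opnorm M * vnorm a * vnorm z.
Proof. pose proof (cs' _ a (mapply M z)). pose proof (opnorm_bound _ _ M z). pose proof (vnorm_pos _ a). nra. Qed.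

Lemma Lf_Wq n m (x1 x2 : X n m) : Lf x1 x2 = Wq (-1) (Xsub x2 x1) (Xsub x2 x1).
Proof. unfold Lf. rewrite !vnorm_pow2. unfold Wq, Xsub; simpl. ring. Qed.

Definition rderiv (psi : R -> R) (t l : R) : Prop :=
  forall eps, eps > 0 -> exists del, del > 0 /\ forall s, s >= 0 -> Rabs (s - t) < del ->
    Rabs (psi s - psi t - (s - t) * l) <= eps * Rabs (s - t).
Definition rcont (psi : R -> R) (t : R) : Prop :=
  forall eps, eps > 0 -> exists del, del > 0 /\ forall s, s >= 0 -> Rabs (s - t) < del -> Rabs (psi s - psi t) < eps.

Lemma rderiv_derivable psi t l : t > 0 -> rderiv psi t l -> derivable_pt_lim psi t l.
Proof. intros Ht H eps Heps. destruct (H (eps/2) ltac:(lra)) as [del [Hd H1]].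
  exists (mkposreal (Rmin del t) ltac:(apply Rmin_pos; lra)). simpl. intros h Hh0 Hh.
  pose proof (Rmin_l del t). pose proof (Rmin_r del t).
  specialize (H1 (t + h)). replace (t + h - t) with h in H1 by ring.
  assert (Rabs h > 0) by (apply Rabs_pos_lt; auto).
  assert (Hth : t + h >= 0) by (pose proof (Rle_abs (-h)); rewrite Rabs_Ropp in *; lra).
  specialize (H1 Hth ltac:(lra)).
  replace ((psi (t + h) - psi t) / h - l) with ((psi (t + h) - psi t - h * l) / h) by (field; auto).
  unfold Rdiv. rewrite Rabs_mult, Rabs_inv. apply Rmult_lt_reg_r with (Rabs h); auto.
  rewrite Rmult_assoc, Rinv_l by lra. nra. Qed.

Lemma rderiv_cont psi t l : rderiv psi t l -> rcont psi t.
Proof. intros H eps Heps. destruct (H 1 ltac:(lra)) as [del [Hd H1]].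
  exists (Rmin del (eps / (Rabs l + 2))). split. apply Rmin_pos; auto. apply Rdiv_lt_0_compat; [lra|pose proof (Rabs_pos l); lra].
  intros s Hs Hst. pose proof (Rmin_l del (eps / (Rabs l + 2))). pose proof (Rmin_r del (eps / (Rabs l + 2))).
  specialize (H1 s Hs ltac:(lra)).
  assert (Rabs (psi s - psi t) <= Rabs (s - t) * (Rabs l + 1)).
  { replace (psi s - psi t) with ((psi s - psi t - (s - t) * l) + (s - t) * l) by ring.
    eapply Rle_trans. apply Rabs_triang. rewrite Rabs_mult. lra. }
  assert (Rabs (s - t) * (Rabs l + 2) < eps). { apply Rlt_le_trans with (eps / (Rabs l + 2) * (Rabs l + 2)).
    apply Rmult_lt_compat_r. pose proof (Rabs_pos l); lra. lra. right; field. pose proof (Rabs_pos l); lra. }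
  pose proof (Rabs_pos (s - t)). nra. Qed.

Lemma curve_cont n m (g : R -> X n m) t v : curve_deriv g t v ->
  forall eps, eps > 0 -> exists del, del > 0 /\ forall s, s >= 0 -> Rabs (s - t) < del -> Xnorm (Xsub (g s) (g t)) < eps.
Proof. intros H eps Heps. destruct (H 1 ltac:(lra)) as [del [Hd H1]].
  exists (Rmin del (eps / (Xnorm v + 2))). split. apply Rmin_pos; auto. apply Rdiv_lt_0_compat; [lra|pose proof (Xnorm_pos _ _ v); lra].
  intros s Hs Hst. pose proof (Rmin_l del (eps / (Xnorm v + 2))). pose proof (Rmin_r del (eps / (Xnorm v + 2))).
  specialize (H1 s Hs ltac:(lra)).
  assert (Xnorm (Xsub (g s) (g t)) <= Rabs (s - t) * (Xnorm v + 1)).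
  { replace (Xsub (g s) (g t)) with (Xadd (Xsub (Xsub (g s) (g t)) (Xscale (s - t) v)) (Xscale (s - t) v)) by Xext.
    eapply Rle_trans. apply Xnorm_add. rewrite Xnorm_scale. lra. }
  assert (Rabs (s - t) * (Xnorm v + 2) < eps). { apply Rlt_le_trans with (eps / (Xnorm v + 2) * (Xnorm v + 2)).
    apply Rmult_lt_compat_r. pose proof (Xnorm_pos _ _ v); lra. lra. right; field. pose proof (Xnorm_pos _ _ v); lra. }
  pose proof (Rabs_pos (s - t)). pose proof (Xnorm_pos _ _ v). nra. Qed.

Lemma Wq_expand n m s (x y v : X n m) c :
  Wq s y y - Wq s x x - c * (2 * Wq s x v) = Wq s (Xsub y x) (Xsub y x) + 2 * Wq s x (Xsub (Xsub y x) (Xscale c v)).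
Proof. rewrite !Wq_subl, !Wq_subr, ?Wq_scaler, ?Wq_subr. rewrite (Wq_sym _ _ _ y x). ring. Qed.

Lemma Wq_rderiv n m s (g : R -> X n m) t v : -1 <= s <= 1 -> curve_deriv g t v ->
  rderiv (fun r => Wq s (g r) (g r)) t (2 * Wq s (g t) v).
Proof. intros Hs H eps Heps. set (x := g t). pose proof (Xnorm_pos _ _ x) as Px. pose proof (Xnorm_pos _ _ v) as Pv.
  set (e1 := Rmin 1 (eps / (4 * (Xnorm x + 1)))).
  assert (He1 : 0 < e1) by (apply Rmin_pos; [lra|apply Rdiv_lt_0_compat; lra]).
  destruct (H e1 He1) as [del [Hd H1]].
  set (d2 := Rmin del (eps / (2 * (Xnorm v + 1) * (Xnorm v + 1)))).
  assert (Hd2 : 0 < d2) by (apply Rmin_pos; [lra|apply Rdiv_lt_0_compat; nra]).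
  exists d2. split; auto. intros r Hr Hrt.
  pose proof (Rmin_l del (eps / (2 * (Xnorm v + 1) * (Xnorm v + 1)))) as H2. pose proof (Rmin_r del (eps / (2 * (Xnorm v + 1) * (Xnorm v + 1)))) as H3.
  pose proof (Rmin_l 1 (eps / (4 * (Xnorm x + 1)))) as H4. pose proof (Rmin_r 1 (eps / (4 * (Xnorm x + 1)))) as H5.
  fold d2 e1 in H2, H3, H4, H5.
  specialize (H1 r Hr ltac:(lra)). fold x in H1.
  rewrite Wq_expand. set (D := Xsub (g r) x) in *. set (E := Xsub D (Xscale (r - t) v)) in *.
  set (h := Rabs (r - t)) in *. assert (0 <= h) by apply Rabs_pos.
  assert (HD : Xnorm D <= h * (e1 + Xnorm v)).
  { assert (HDe : D = Xadd E (Xscale (r - t) v)) by (unfold E, D; Xext). rewrite HDe at 1. eapply Rle_trans. apply Xnorm_add. rewrite Xnorm_scale. fold h. lra. }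
  pose proof (Wq_cs n m s D D Hs). pose proof (Wq_cs n m s x E Hs).
  eapply Rle_trans. apply Rabs_triang. rewrite Rabs_mult, (Rabs_pos_eq 2) by lra.
  assert (Xnorm D * Xnorm D <= h * (eps / 2)).
  { pose proof (Xnorm_pos _ _ D). assert (Xnorm D <= h * (1 + Xnorm v)) by nra.
    assert (h * ((1 + Xnorm v) * (1 + Xnorm v)) <= eps / 2).
    { apply Rle_trans with (eps / (2 * (Xnorm v + 1) * (Xnorm v + 1)) * ((1 + Xnorm v) * (1 + Xnorm v))).
      apply Rmult_le_compat_r; nra. right; field; lra. }
    nra. }
  assert (Xnorm x * Xnorm E <= h * (eps / 4)).
  { assert (Xnorm x * e1 <= eps / 4). { apply Rle_trans with (Xnorm x * (eps / (4 * (Xnorm x + 1)))). nra.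
      apply Rle_trans with ((Xnorm x + 1) * (eps / (4 * (Xnorm x + 1)))). apply Rmult_le_compat_r. apply Rlt_le, Rdiv_lt_0_compat; lra. lra. right; field; lra. }
    pose proof (Xnorm_pos _ _ E). nra. }
  nra. Qed.

Lemma curve_lin n m (g1 g2 : R -> X n m) t v1 v2 a b : curve_deriv g1 t v1 -> curve_deriv g2 t v2 ->
  curve_deriv (fun s => Xadd (Xscale a (g1 s)) (Xscale b (g2 s))) t (Xadd (Xscale a v1) (Xscale b v2)).
Proof. intros H1 H2 eps Heps. set (e := eps / (Rabs a + Rabs b + 1)).
  assert (He : e > 0) by (apply Rdiv_lt_0_compat; [lra|pose proof (Rabs_pos a); pose proof (Rabs_pos b); lra]).
  destruct (H1 e He) as [d1 [Hd1 K1]]. destruct (H2 e He) as [d2 [Hd2 K2]].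
  exists (Rmin d1 d2). split. apply Rmin_pos; auto. intros s Hs Hst. pose proof (Rmin_l d1 d2). pose proof (Rmin_r d1 d2).
  specialize (K1 s Hs ltac:(lra)). specialize (K2 s Hs ltac:(lra)).
  replace (Xsub (Xsub (Xadd (Xscale a (g1 s)) (Xscale b (g2 s))) (Xadd (Xscale a (g1 t)) (Xscale b (g2 t)))) (Xscale (s - t) (Xadd (Xscale a v1) (Xscale b v2))))
    with (Xadd (Xscale a (Xsub (Xsub (g1 s) (g1 t)) (Xscale (s - t) v1))) (Xscale b (Xsub (Xsub (g2 s) (g2 t)) (Xscale (s - t) v2)))) by Xext.
  eapply Rle_trans. apply Xnorm_add. rewrite !Xnorm_scale.
  pose proof (Rabs_pos a). pose proof (Rabs_pos b). pose proof (Rabs_pos (s - t)).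
  assert (e * (Rabs a + Rabs b + 1) = eps) by (unfold e; field; lra). nra. Qed.

Lemma curve_ext n m (g1 g2 : R -> X n m) t v : t >= 0 -> (forall s, s >= 0 -> g1 s = g2 s) -> curve_deriv g1 t v -> curve_deriv g2 t v.
Proof. intros Ht He H eps Heps. destruct (H eps Heps) as [d [Hd K]]. exists d; split; auto. intros s Hs Hst.
  rewrite <- !He by auto. auto. Qed.


Lemma Rmult_le_0_r' a b : a <= 0 -> 0 <= b -> a * b <= 0.
Proof. nra. Qed.

Lemma mono0 (chi chi' : R -> R) T : 0 <= T ->
  (forall t, 0 < t <= T -> derivable_pt_lim chi t (chi' t)) ->
  (forall t, 0 < t <= T -> chi' t <= 0) -> rcont chi 0 -> chi T <= chi 0.
Proof. intros HT Hd Hn Hc. destruct (Req_dec T 0) as [->|HT0]; [lra|].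
  apply Rnot_lt_le; intros Hlt. destruct (Hc (chi T - chi 0) ltac:(lra)) as [del [Hdel Hc']].
  set (a := Rmin (del/2) (T/2)). assert (0 < a) by (apply Rmin_pos; lra).
  pose proof (Rmin_l (del/2) (T/2)). pose proof (Rmin_r (del/2) (T/2)). fold a in H0, H1.
  destruct (MVT_cor2 chi chi' a T ltac:(lra)) as [c [Hc1 Hc2]].
  { intros c Hc0. apply Hd. lra. }
  specialize (Hn c ltac:(lra)). specialize (Hc' a ltac:(lra) ltac:(rewrite Rminus_0_r, Rabs_pos_eq; lra)).
  pose proof (Rabs_def2 _ _ Hc'). assert (chi' c * (T - a) <= 0) by (apply Rmult_le_0_r'; lra). lra. Qed.

Lemma dlin K t : derivable_pt_lim (fun t => - (K * t)) t (- K).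
Proof. intros eps Heps. exists (mkposreal 1 Rlt_0_1). intros h Hh _.
  replace ((- (K * (t + h)) - - (K * t)) / h - - K) with 0 by (field; auto). rewrite Rabs_R0; lra. Qed.

Lemma exp_le1 x : x <= 0 -> exp x <= 1.
Proof. intros. rewrite <- exp_0. destruct (Req_dec x 0). subst; lra. left. apply exp_increasing. lra. Qed.
Lemma exp_ge1 x : 1 + x <= exp x.
Proof. destruct (Req_dec x 0). subst. rewrite exp_0; lra. left; apply exp_ineq1; auto. Qed.

Lemma gronwall_le (psi psi' : R -> R) K b T : K > 0 -> 0 <= b -> 0 <= T ->
  (forall t, 0 < t <= T -> derivable_pt_lim psi t (psi' t)) ->
  (forall t, 0 < t <= T -> psi' t <= K * psi t + b) -> rcont psi 0 ->
  psi T <= (psi 0 + b / K) * exp (K * T) - b / K.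
Proof. intros HK Hb HT Hd Hle Hc.
  set (chi := fun t => (psi t + b / K) * exp (- (K * t))).
  set (chi' := fun t => psi' t * exp (- (K * t)) + (psi t + b / K) * (exp (- (K * t)) * - K)).
  assert (chi T <= chi 0).
  { apply (mono0 chi chi' T HT).
    - intros t Ht. unfold chi, chi'.
      assert (H1 : derivable_pt_lim (fun t => psi t + b / K) t (psi' t + 0)).
      { apply (derivable_pt_lim_plus psi (fct_cte (b/K))). apply Hd; auto. apply derivable_pt_lim_const. }
      assert (H2 : derivable_pt_lim (fun t => exp (- (K * t))) t (exp (- (K * t)) * - K)).
      { apply (derivable_pt_lim_comp (fun t => - (K * t)) exp). apply dlin. apply derivable_pt_lim_exp. }
      pose proof (derivable_pt_lim_mult _ _ t _ _ H1 H2). rewrite Rplus_0_r in H. exact H.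
    - intros t Ht. unfold chi'. specialize (Hle t Ht). pose proof (exp_pos (- (K * t))).
      replace (psi' t * exp (- (K * t)) + (psi t + b / K) * (exp (- (K * t)) * - K)) with ((psi' t - K * psi t - b) * exp (- (K * t))) by (field; lra).
      apply Rmult_le_0_r'; lra.
    - intros eps Heps. set (c := Rabs (psi 0 + b / K)).
      assert (Hc0 : 0 <= c) by apply Rabs_pos.
      destruct (Hc (eps/2) ltac:(lra)) as [d [Hd0 Hd1]].
      exists (Rmin d (eps / (2 * K * (c + 1)))). split. apply Rmin_pos; auto. apply Rdiv_lt_0_compat; nra.
      intros s Hs Hs0. pose proof (Rmin_l d (eps / (2 * K * (c + 1)))). pose proof (Rmin_r d (eps / (2 * K * (c + 1)))).
      rewrite Rminus_0_r, Rabs_pos_eq in Hs0 by lra. specialize (Hd1 s Hs ltac:(rewrite Rminus_0_r, Rabs_pos_eq; lra)).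
      unfold chi. rewrite Rmult_0_r, Ropp_0, exp_0, Rmult_1_r.
      pose proof (exp_le1 (- (K * s)) ltac:(nra)). pose proof (exp_pos (- (K * s))). pose proof (exp_ge1 (- (K * s))).
      replace ((psi s + b / K) * exp (- (K * s)) - (psi 0 + b / K)) with ((psi s - psi 0) * exp (- (K * s)) + (psi 0 + b/K) * (exp (- (K * s)) - 1)) by ring.
      eapply Rle_lt_trans. apply Rabs_triang. rewrite !Rabs_mult. fold c. rewrite (Rabs_pos_eq (exp _)) by lra.
      rewrite (Rabs_left1 (exp (- (K * s)) - 1)) by lra.
      assert (K * s * (c + 1) <= eps / 2). { apply Rle_trans with (K * (eps / (2 * K * (c + 1))) * (c + 1)).
        apply Rmult_le_compat_r; [lra|]. apply Rmult_le_compat_l; lra. right; field; lra. }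
      pose proof (Rabs_pos (psi s - psi 0)). nra. }
  unfold chi in H. rewrite Rmult_0_r, Ropp_0, exp_0, Rmult_1_r in H.
  apply Rmult_le_compat_r with (r := exp (K * T)) in H. 2: left; apply exp_pos.
  rewrite Rmult_assoc, <- exp_plus in H. replace (- (K * T) + K * T) with 0 in H by ring. rewrite exp_0 in H. lra. Qed.



Lemma gronwall_ge (psi psi' : R -> R) K T : K > 0 -> 0 <= T ->
  (forall t, 0 < t <= T -> derivable_pt_lim psi t (psi' t)) ->
  (forall t, 0 < t <= T -> psi' t >= K * psi t) -> rcont psi 0 ->
  psi T >= psi 0 * exp (K * T).
Proof. intros HK HT Hd Hge Hc.
  assert (- psi T <= (- psi 0 + 0 / K) * exp (K * T) - 0 / K).
  { apply (gronwall_le (fun t => - psi t) (fun t => - psi' t) K 0 T HK ltac:(lra) HT).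
    - intros t Ht. apply (derivable_pt_lim_opp psi). auto.
    - intros t Ht. specialize (Hge t Ht). lra.
    - intros eps Heps. destruct (Hc eps Heps) as [d [Hd0 Hd1]]. exists d; split; auto. intros s Hs Hst.
      specialize (Hd1 s Hs Hst). replace (- psi s - - psi 0) with (- (psi s - psi 0)) by ring. rewrite Rabs_Ropp; auto. }
  unfold Rdiv in H. rewrite Rmult_0_l, Rplus_0_r, Rminus_0_r in H. lra. Qed.

Lemma first_crossing (phi : R -> R) t1 : (forall t, 0 <= t <= t1 -> rcont phi t) -> phi 0 > 0 -> 0 <= t1 -> phi t1 <= 0 ->
  exists ts, 0 < ts <= t1 /\ phi ts = 0 /\ forall s, 0 <= s < ts -> phi s > 0.
Proof. intros Hc H0 Ht1 H1.
  set (E := fun x => 0 <= - x <= t1 /\ phi (- x) <= 0).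
  destruct (completeness E) as [mm [Hub Hlub]].
  { exists 0. intros x [Hx _]. lra. }
  { exists (- t1). unfold E. rewrite Ropp_involutive. split; [lra|auto]. }
  set (g := - mm).
  assert (Hlow : forall x, 0 <= x <= t1 -> phi x <= 0 -> g <= x).
  { intros x Hx Hpx. assert (E (- x)) by (unfold E; rewrite Ropp_involutive; auto). specialize (Hub _ H). unfold g; lra. }
  assert (Hg0 : 0 <= g). { assert (is_upper_bound E 0) by (intros x [Hx _]; lra). specialize (Hlub 0 H). unfold g; lra. }
  assert (Hgt1 : g <= t1) by (apply Hlow; auto; lra).
  assert (Happ : forall g', g' > g -> exists x, 0 <= x <= t1 /\ phi x <= 0 /\ x < g').
  { intros g' Hg'. apply NNPP. intros Hne. assert (is_upper_bound E (- g')).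
    { intros y [Hy Hpy]. apply Rnot_lt_le. intros Hlt. apply Hne. exists (- y). split; auto. split; auto. lra. }
    specialize (Hlub _ H). unfold g in Hg'. lra. }
  assert (Hpg : phi g <= 0).
  { apply Rnot_lt_le. intros Hpos. destruct (Hc g ltac:(lra) (phi g) Hpos) as [d [Hd Hd1]].
    destruct (Happ (g + d) ltac:(lra)) as [x [Hx [Hpx Hxg]]]. pose proof (Hlow x Hx Hpx).
    specialize (Hd1 x ltac:(lra) ltac:(rewrite Rabs_pos_eq; lra)). pose proof (Rabs_def2 _ _ Hd1). lra. }
  assert (Hgpos : 0 < g). { destruct (Req_dec g 0). rewrite H in Hpg. lra. lra. }
  assert (Hbefore : forall s, 0 <= s < g -> phi s > 0).
  { intros s Hs. apply Rnot_le_lt. intros Hle. pose proof (Hlow s ltac:(lra) Hle). lra. }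
  exists g. split; [lra|]. split; auto.
  apply Rle_antisym; auto. apply Rnot_lt_le. intros Hneg.
  destruct (Hc g ltac:(lra) (- phi g) ltac:(lra)) as [d [Hd Hd1]].
  set (s := Rmax 0 (g - d/2)). assert (0 <= s < g) by (unfold s; split; [apply Rmax_l|apply Rmax_lub_lt; lra]).
  assert (Rabs (s - g) < d). { rewrite Rabs_left by lra. unfold s. pose proof (Rmax_r 0 (g - d/2)). lra. }
  specialize (Hd1 s ltac:(lra) H2). pose proof (Rabs_def2 _ _ Hd1). specialize (Hbefore s H). lra. Qed.


Lemma inv_small eps : eps > 0 -> exists N : nat, forall k, (N <= k)%nat -> / (INR k + 1) < eps.
Proof. intros. destruct (archimed_cor1 eps H) as [N [HN HN0]]. exists N. intros k Hk.
  apply Rle_lt_trans with (/ INR N); auto. apply Rinv_le_contravar. apply lt_0_INR; auto.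
  apply le_INR in Hk. lra. Qed.

Lemma valadh_in u T l : (forall k, 0 <= u k <= T) -> ValAdh u l -> 0 <= l <= T.
Proof. intros Hu Hv. split; apply Rnot_lt_le; intros Hl.
  - destruct (Hv (disc l (mkposreal (- l) ltac:(lra))) 0%nat) as [p [_ Hp]].
    exists (mkposreal (- l) ltac:(lra)). intros y Hy; auto. unfold disc in Hp; simpl in Hp.
    pose proof (Rabs_def2 _ _ Hp). specialize (Hu p). lra.
  - destruct (Hv (disc l (mkposreal (l - T) ltac:(lra))) 0%nat) as [p [_ Hp]].
    exists (mkposreal (l - T) ltac:(lra)). intros y Hy; auto. unfold disc in Hp; simpl in Hp.
    pose proof (Rabs_def2 _ _ Hp). specialize (Hu p). lra. Qed.

Lemma compact_cover (P : R -> R -> Prop) T : 0 <= T ->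
  (forall s d d', P s d -> 0 < d' <= d -> P s d') ->
  (forall t, 0 <= t <= T -> exists d, d > 0 /\ forall s, 0 <= s <= T -> Rabs (s - t) < d -> P s d) ->
  exists d, d > 0 /\ forall s, 0 <= s <= T -> P s d.
Proof. intros HT Hmono Hloc. apply NNPP. intros Hno.
  assert (Hbad : forall k : nat, exists s, 0 <= s <= T /\ ~ P s (/ (INR k + 1))).
  { intros k. apply NNPP. intros Hk. apply Hno. exists (/ (INR k + 1)). split.
    apply Rinv_0_lt_compat. pose proof (pos_INR k); lra.
    intros s Hs. apply NNPP. intros Hns. apply Hk. exists s; auto. }
  set (u := fun k => epsilon (inhabits 0) (fun s => 0 <= s <= T /\ ~ P s (/ (INR k + 1)))).
  assert (Hu : forall k, 0 <= u k <= T /\ ~ P (u k) (/ (INR k + 1))) by (intros k; apply epsilon_spec; auto).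
  destruct (Bolzano_Weierstrass u (fun c => 0 <= c <= T) (compact_P3 0 T) ltac:(intros k; apply Hu)) as [l Hl].
  assert (Hlin : 0 <= l <= T) by (apply (valadh_in u T); auto; intros; apply Hu).
  destruct (Hloc l Hlin) as [d [Hd Hd1]].
  destruct (inv_small d Hd) as [N HN].
  destruct (Hl (disc l (mkposreal d Hd)) N) as [p [Hp Hp1]].
  { exists (mkposreal d Hd). intros y Hy; auto. }
  unfold disc in Hp1; simpl in Hp1. destruct (Hu p) as [Hup Hnp]. apply Hnp.
  apply (Hmono _ d). apply Hd1; auto. split. apply Rinv_0_lt_compat. pose proof (pos_INR p); lra.
  left. apply HN; auto. Qed.

Lemma fin_delta N (P : Fin.t N -> R -> Prop) : (forall i d d', P i d -> 0 < d' <= d -> P i d') ->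
  (forall i, exists d, d > 0 /\ P i d) -> exists d, d > 0 /\ forall i, P i d.
Proof. induction N; intros Hm Hex.
  - exists 1. split; [lra|]. intros i; inversion i.
  - destruct (IHN (fun i => P (Fin.FS i))) as [d1 [Hd1 H1]]. intros; eapply Hm; eauto. intros; apply Hex.
    destruct (Hex Fin.F1) as [d0 [Hd0 H0]]. exists (Rmin d0 d1). split. apply Rmin_pos; auto.
    intros i. pattern i; apply Fin.caseS'.
    + eapply Hm; eauto. split. apply Rmin_pos; auto. apply Rmin_l.
    + intros p. eapply Hm. apply H1. split. apply Rmin_pos; auto. apply Rmin_r. Qed.

Lemma fin_nat N (P : Fin.t N -> nat -> Prop) : (forall i K K', P i K -> (K <= K')%nat -> P i K') ->
  (forall i, exists K, P i K) -> exists K, forall i, P i K.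
Proof. induction N; intros Hm Hex.
  - exists 0%nat. intros i; inversion i.
  - destruct (IHN (fun i => P (Fin.FS i))) as [K1 H1]. intros; eapply Hm; eauto. intros; apply Hex.
    destruct (Hex Fin.F1) as [K0 H0]. exists (Nat.max K0 K1).
    intros i. pattern i; apply Fin.caseS'.
    + eapply Hm; eauto. lia.
    + intros p. eapply Hm. apply H1. lia. Qed.

Definition conv (u : nat -> R) (l : R) : Prop := forall eps, eps > 0 -> exists N, forall k, (N <= k)%nat -> Rabs (u k - l) < eps.
Definition incr (s : nat -> nat) : Prop := forall k, (s k < s (S k))%nat.

Lemma incr_ge s : incr s -> forall k, (k <= s k)%nat.
Proof. intros H k; induction k; [lia|]. specialize (H k). lia. Qed.
Lemma incr_comp s1 s2 : incr s1 -> incr s2 -> incr (fun k => s1 (s2 k)).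
Proof. intros H1 H2 k. simpl. specialize (H2 k).
  assert (forall a b, (a < b)%nat -> (s1 a < s1 b)%nat). { intros a b Hab. induction Hab. apply H1. specialize (H1 m). lia. }
  auto. Qed.
Lemma conv_sub u l s : incr s -> conv u l -> conv (fun k => u (s k)) l.
Proof. intros Hs H eps Heps. destruct (H eps Heps) as [N HN]. exists N. intros k Hk. apply HN. pose proof (incr_ge s Hs k). lia. Qed.

Lemma BW1 (u : nat -> R) M : (forall k, Rabs (u k) <= M) -> exists s, incr s /\ exists l, conv (fun k => u (s k)) l.
Proof. intros Hb.
  destruct (Bolzano_Weierstrass u (fun c => -M <= c <= M) (compact_P3 (-M) M)) as [l Hl].
  { intros k. specialize (Hb k). pose proof (Rle_abs (u k)). pose proof (Rle_abs (- u k)). rewrite Rabs_Ropp in H0. lra. }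
  set (next := fun (k p : nat) => epsilon (inhabits 0%nat) (fun q => (p < q)%nat /\ Rabs (u q - l) < / (INR k + 1))).
  assert (Hnext : forall k p, (p < next k p)%nat /\ Rabs (u (next k p) - l) < / (INR k + 1)).
  { intros k p. apply epsilon_spec.
    assert (Hpos : 0 < / (INR k + 1)) by (apply Rinv_0_lt_compat; pose proof (pos_INR k); lra).
    destruct (Hl (disc l (mkposreal _ Hpos)) (S p)) as [q [Hq Hq1]].
    exists (mkposreal _ Hpos). intros y Hy; auto. exists q. split; [lia|]. apply Hq1. }
  set (s := fix s (k : nat) : nat := match k with O => next O O | S k' => next (S k') (s k') end).
  exists s. split.
  - intros k. simpl. apply Hnext.
  - exists l. intros eps Heps. destruct (inv_small eps Heps) as [N HN]. exists N. intros k Hk.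
    eapply Rlt_trans; [|apply (HN k Hk)]. destruct k; simpl; apply Hnext. Qed.

Lemma BWvec N (u : nat -> vec N) M : (forall k i, Rabs (u k i) <= M) ->
  exists s, incr s /\ exists l : vec N, forall i, conv (fun k => u (s k) i) (l i).
Proof. revert u. induction N; intros u Hb.
  - exists (fun k => k). split. intros k; lia. exists (fun _ => 0). intros i; inversion i.
  - destruct (BW1 (fun k => u k Fin.F1) M) as [s1 [Hs1 [l1 Hl1]]]. intros; apply Hb.
    destruct (IHN (fun k i => u (s1 k) (Fin.FS i))) as [s2 [Hs2 [l2 Hl2]]]. intros; apply Hb.
    exists (fun k => s1 (s2 k)). split. apply incr_comp; auto.
    exists (fun i => Fin.caseS' i (fun _ => R) l1 (fun p => l2 p)).
    intros i. pattern i; apply Fin.caseS'; simpl.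
    + apply (conv_sub (fun k => u (s1 k) Fin.F1)); auto.
    + intros p. apply Hl2. Qed.

Lemma vnorm_small N (w : vec N) e : (forall i, Rabs (w i) < e) -> vnorm w <= INR N * e.
Proof. intros H. eapply Rle_trans. apply vnorm_le_sum. rewrite <- vsum_const. apply vsum_le. intros; left; auto. Qed.

Lemma BWX n m (u : nat -> X n m) M : (forall k, Xnorm (u k) <= M) ->
  exists v, forall rho, rho > 0 -> forall N0, exists k, (N0 <= k)%nat /\ Xnorm (Xsub (u k) v) < rho.
Proof. intros Hb.
  destruct (BWvec n (fun k => fst (u k)) M) as [s1 [Hs1 [l1 Hl1]]].
  { intros k i. eapply Rle_trans. apply vnorm_coord. eapply Rle_trans. apply Xnorm_fst. auto. }
  destruct (BWvec m (fun k => snd (u (s1 k))) M) as [s2 [Hs2 [l2 Hl2]]].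
  { intros k i. eapply Rle_trans. apply vnorm_coord. eapply Rle_trans. apply Xnorm_snd. auto. }
  exists (l1, l2). intros rho Hrho N0.
  set (e := rho / (INR n + INR m + 1)).
  assert (He : e > 0) by (apply Rdiv_lt_0_compat; [lra|pose proof (pos_INR n); pose proof (pos_INR m); lra]).
  destruct (fin_nat n (fun i K => forall k, (K <= k)%nat -> Rabs (fst (u (s1 (s2 k))) i - l1 i) < e)) as [K1 HK1].
  { intros i K K' H HK k Hk. apply H. lia. }
  { intros i. destruct (conv_sub _ _ s2 Hs2 (Hl1 i) e He) as [K HK]. exists K. auto. }
  destruct (fin_nat m (fun i K => forall k, (K <= k)%nat -> Rabs (snd (u (s1 (s2 k))) i - l2 i) < e)) as [K2 HK2].
  { intros i K K' H HK k Hk. apply H. lia. }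
  { intros i. destruct (Hl2 i e He) as [K HK]. exists K. auto. }
  set (k := Nat.max N0 (Nat.max K1 K2)). exists (s1 (s2 k)). split.
  { pose proof (incr_ge _ (incr_comp _ _ Hs1 Hs2) k). simpl in H. unfold k in *. lia. }
  eapply Rle_lt_trans. apply Xnorm_le. simpl.
  pose proof (vnorm_small n (vsub (fst (u (s1 (s2 k)))) l1) e ltac:(intros i; apply (HK1 i k); unfold k; lia)).
  pose proof (vnorm_small m (vsub (snd (u (s1 (s2 k)))) l2) e ltac:(intros i; apply (HK2 i k); unfold k; lia)).
  assert ((INR n + INR m) * e < rho). { unfold e. apply Rlt_le_trans with ((INR n + INR m + 1) * (rho / (INR n + INR m + 1))).
    apply Rmult_lt_compat_r; auto. lra. right; field. pose proof (pos_INR n); pose proof (pos_INR m); lra. }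
  lra. Qed.


Lemma curve_sub n m (g1 g2 : R -> X n m) t v1 v2 : curve_deriv g1 t v1 -> curve_deriv g2 t v2 ->
  curve_deriv (fun s => Xsub (g1 s) (g2 s)) t (Xsub v1 v2).
Proof. intros H1 H2. pose proof (curve_lin n m g1 g2 t v1 v2 1 (-1) H1 H2).
  replace (fun s => Xsub (g1 s) (g2 s)) with (fun s => Xadd (Xscale 1 (g1 s)) (Xscale (-1) (g2 s))).
  replace (Xsub v1 v2) with (Xadd (Xscale 1 v1) (Xscale (-1) v2)) by Xext. auto.
  apply functional_extensionality; intros; Xext. Qed.
Lemma curve_subsc n m (g1 g2 : R -> X n m) t v1 v2 c : curve_deriv g1 t v1 -> curve_deriv g2 t v2 ->
  curve_deriv (fun s => Xsub (g1 s) (Xscale c (g2 s))) t (Xsub v1 (Xscale c v2)).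
Proof. intros H1 H2. pose proof (curve_lin n m g1 g2 t v1 v2 1 (-c) H1 H2).
  replace (fun s => Xsub (g1 s) (Xscale c (g2 s))) with (fun s => Xadd (Xscale 1 (g1 s)) (Xscale (-c) (g2 s))).
  replace (Xsub v1 (Xscale c v2)) with (Xadd (Xscale 1 v1) (Xscale (-c) v2)) by Xext. auto.
  apply functional_extensionality; intros; Xext. Qed.

Section Main.
Variables (n m : nat) (f : X n m -> vec n) (g : X n m -> vec m) (U : X n m -> Prop).
Variables (fa : X n m -> mat n n) (fz : X n m -> mat n m) (ga : X n m -> mat m n) (gz : X n m -> mat m m).
Hypothesis Hf : forall x, U x -> has_partials f x (fa x) (fz x).
Hypothesis Hg : forall x, U x -> has_partials g x (ga x) (gz x).

Definition F (x : X n m) : X n m := (f x, g x).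
Definition DFap (x v : X n m) : X n m := Blk (fa x) (fz x) (ga x) (gz x) v.
Definition seg (x y : X n m) (s : R) : X n m := Xadd (Xscale (1 - s) x) (Xscale s y).

Lemma F_partial x : U x -> forall eps, eps > 0 -> exists del, del > 0 /\ forall u, Xnorm u < del ->
  Xnorm (Xsub (Xsub (F (Xadd x u)) (F x)) (DFap x u)) <= eps * Xnorm u.
Proof. intros Hx eps Heps. destruct (Hf x Hx (eps/2) ltac:(lra)) as [d1 [Hd1 K1]]. destruct (Hg x Hx (eps/2) ltac:(lra)) as [d2 [Hd2 K2]].
  exists (Rmin d1 d2). split. apply Rmin_pos; auto. intros u Hu. pose proof (Rmin_l d1 d2). pose proof (Rmin_r d1 d2).
  specialize (K1 u ltac:(lra)). specialize (K2 u ltac:(lra)). eapply Rle_trans. apply Xnorm_le.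
  unfold F, DFap, Blk, Xsub; simpl. lra. Qed.

Lemma seg_MVT x y P : (forall s, 0 <= s <= 1 -> U (seg x y s)) ->
  exists s, 0 <= s <= 1 /\ Wq 1 P (Xsub (F y) (F x)) = Wq 1 P (DFap (seg x y s) (Xsub y x)).
Proof. intros HU. set (D := Xsub y x).
  destruct (MVT_cor2 (fun s => Wq 1 P (F (seg x y s))) (fun s => Wq 1 P (DFap (seg x y s) D)) 0 1 ltac:(lra)) as [c [Hc1 Hc2]].
  - intros s Hs. intros eps Heps. pose proof (Xnorm_pos _ _ P) as HP. pose proof (Xnorm_pos _ _ D) as HD.
    set (e := eps / (2 * (Xnorm P * Xnorm D + 1))). assert (He : e > 0) by (apply Rdiv_lt_0_compat; nra).
    destruct (F_partial (seg x y s) (HU s Hs) e He) as [del [Hdel K]].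
    assert (Hdd : del / (Xnorm D + 1) > 0) by (apply Rdiv_lt_0_compat; lra).
    exists (mkposreal _ Hdd). simpl. intros h Hh0 Hh.
    assert (Hs' : seg x y (s + h) = Xadd (seg x y s) (Xscale h D)) by (unfold seg, D; Xext).
    rewrite Hs'.
    assert (Hu : Xnorm (Xscale h D) < del).
    { rewrite Xnorm_scale. apply Rle_lt_trans with (Rabs h * (Xnorm D + 1)). pose proof (Rabs_pos h); nra.
      apply Rlt_le_trans with (del / (Xnorm D + 1) * (Xnorm D + 1)). apply Rmult_lt_compat_r; lra. right; field; lra. }
    specialize (K _ Hu).
    replace ((Wq 1 P (F (Xadd (seg x y s) (Xscale h D))) - Wq 1 P (F (seg x y s))) / h - Wq 1 P (DFap (seg x y s) D))
      with (Wq 1 P (Xsub (Xsub (F (Xadd (seg x y s) (Xscale h D))) (F (seg x y s))) (DFap (seg x y s) (Xscale h D))) / h).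
    2: { unfold DFap. rewrite Blk_scale. rewrite !Wq_subr, Wq_scaler. field; auto. }
    unfold Rdiv. rewrite Rabs_mult, Rabs_inv.
    pose proof (Wq_cs _ _ 1 P (Xsub (Xsub (F (Xadd (seg x y s) (Xscale h D))) (F (seg x y s))) (DFap (seg x y s) (Xscale h D))) ltac:(lra)).
    rewrite Xnorm_scale in K. assert (Rabs h > 0) by (apply Rabs_pos_lt; auto).
    apply Rmult_lt_reg_r with (Rabs h); auto. rewrite Rmult_assoc, Rinv_l, Rmult_1_r by lra.
    assert (Xnorm P * (e * (Rabs h * Xnorm D)) < eps * Rabs h).
    { assert (Xnorm P * Xnorm D * e < eps). { unfold e. apply Rlt_le_trans with ((Xnorm P * Xnorm D + 1) * (eps / (2 * (Xnorm P * Xnorm D + 1)))).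
        apply Rmult_lt_compat_r. apply Rdiv_lt_0_compat; nra. lra. replace ((Xnorm P * Xnorm D + 1) * (eps / (2 * (Xnorm P * Xnorm D + 1)))) with (eps / 2) by (field; nra). lra. } nra. }
    pose proof (Xnorm_pos _ _ (Xsub (Xsub (F (Xadd (seg x y s) (Xscale h D))) (F (seg x y s))) (DFap (seg x y s) (Xscale h D)))). nra.
  - exists c. split; [lra|]. replace (seg x y 1) with y in Hc1 by (unfold seg; Xext). replace (seg x y 0) with x in Hc1 by (unfold seg; Xext).
    rewrite Wq_subr. lra. Qed.


Lemma Wqm_vn (D : X n m) : Wq (-1) D D = vnorm (fst D) * vnorm (fst D) - vnorm (snd D) * vnorm (snd D).
Proof. unfold Wq. rewrite !vnorm_sq. ring. Qed.
Lemma Wq_flip (D W : X n m) : Wq (-1) D W = Wq 1 (fst D, vscale (-1) (snd D)) W.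
Proof. unfold Wq; simpl. rewrite inner_scalel. ring. Qed.
Lemma Wq_negsub (x y : X n m) s : Wq s (Xsub x y) (Xsub x y) = Wq s (Xsub y x) (Xsub y x).
Proof. replace (Xsub x y) with (Xscale (-1) (Xsub y x)) by Xext. rewrite Wq_scalel, Wq_scaler. ring. Qed.

Variables (Gam : X n m -> Prop) (alpha ell : X n m -> R) (c1 d : R).
Hypothesis HUconv : is_convex U.
Hypothesis Hcone : forall x x', U x -> Ccone x x' -> U x' -> Bbox d x x'.
Hypothesis Hell : forall x, U x -> ell x >= 0.
Hypothesis Hc1 : c1 > 0.
Hypothesis Hfa : forall x, U x -> forall a' : vec n, inner a' (mapply (fa x) a') >= alpha x * vnorm a' ^ 2.
Hypothesis Hgz : forall x, U x -> forall z' : vec m, inner z' (mapply (gz x) z') <= ell x * vnorm z' ^ 2.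
Hypothesis Hgap : forall x, U x -> alpha x >= ell x + opnorm (fz x) + opnorm (ga x) + c1.
Hypothesis HGU : forall x, Gam x -> U x.
Hypothesis HGinv : pos_invariant f g Gam.

Lemma cone_deriv_bound xi Da Dz : U xi -> vnorm Dz <= vnorm Da ->
  inner Da (vadd (mapply (fa xi) Da) (mapply (fz xi) Dz)) + inner (vscale (-1) Dz) (vadd (mapply (ga xi) Da) (mapply (gz xi) Dz))
  >= c1 * (vnorm Da * vnorm Da).
Proof. intros Hxi Hle. rewrite inner_scalel, !inner_addr.
  pose proof (Hfa xi Hxi Da). pose proof (Hgz xi Hxi Dz). pose proof (Hgap xi Hxi). pose proof (Hell xi Hxi).
  pose proof (inner_op_ge _ _ (fz xi) Da Dz). pose proof (inner_op_le _ _ (ga xi) Dz Da).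
  pose proof (opnorm_pos _ _ (fz xi)). pose proof (opnorm_pos _ _ (ga xi)). pose proof (vnorm_pos _ Da). pose proof (vnorm_pos _ Dz).
  rewrite <- !Rsqr_pow2 in *. unfold Rsqr in *.
  assert (opnorm (fz xi) * vnorm Da * vnorm Dz <= opnorm (fz xi) * vnorm Da * vnorm Da) by (apply Rmult_le_compat_l; nra).
  assert (opnorm (ga xi) * vnorm Dz * vnorm Da <= opnorm (ga xi) * vnorm Da * vnorm Da) by (apply Rmult_le_compat_r; [lra| apply Rmult_le_compat_l; lra]).
  assert (ell xi * (vnorm Dz * vnorm Dz) <= ell xi * (vnorm Da * vnorm Da)) by (apply Rmult_le_compat_l; nra).
  assert (alpha xi * (vnorm Da * vnorm Da) >= (ell xi + opnorm (fz xi) + opnorm (ga xi) + c1) * (vnorm Da * vnorm Da)).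
  { apply Rmult_ge_compat_r; nra. }
  lra. Qed.

Lemma cone_le x y : Gam x -> Gam y -> Lf x y <= 0.
Proof. intros Hx Hy. destruct (HGinv x Hx) as [pA [[HA0 HAd] HAG]]. destruct (HGinv y Hy) as [pB [[HB0 HBd] HBG]].
  set (D := fun t => Xsub (pB t) (pA t)).
  assert (HD : forall t, t >= 0 -> curve_deriv D t (Xsub (F (pB t)) (F (pA t)))).
  { intros t Ht. apply curve_sub; [apply HBd|apply HAd]; auto. }
  set (Lq := fun t => Wq (-1) (D t) (D t)).
  set (Lq' := fun t => 2 * Wq (-1) (D t) (Xsub (F (pB t)) (F (pA t)))).
  assert (HLr : forall t, t >= 0 -> rderiv Lq t (Lq' t)) by (intros; apply Wq_rderiv; auto; lra).
  assert (HLge : forall t, t >= 0 -> Lq t >= 0 -> Lq' t >= 2 * c1 * Lq t).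
  { intros t Ht HL. unfold Lq'. rewrite Wq_flip.
    destruct (seg_MVT (pA t) (pB t) (fst (D t), vscale (-1) (snd (D t)))) as [s [Hs Hs1]].
    { intros s Hs. apply HUconv; auto. }
    rewrite Hs1. set (xi := seg (pA t) (pB t) s).
    assert (Hxi : U xi) by (apply HUconv; auto).
    unfold Lq in *. rewrite Wqm_vn in *. fold (D t).
    assert (vnorm (snd (D t)) <= vnorm (fst (D t))) by (apply le_of_sq; [apply vnorm_pos|lra]).
    pose proof (cone_deriv_bound xi (fst (D t)) (snd (D t)) Hxi H).
    unfold Wq, DFap, Blk. simpl. rewrite Rmult_1_l. unfold D in *; simpl in *. pose proof (vnorm_pos _ (vsub (snd (pB t)) (snd (pA t)))).
    assert (0 <= c1 * (vnorm (vsub (snd (pB t)) (snd (pA t))) * vnorm (vsub (snd (pB t)) (snd (pA t))))) by (apply Rmult_le_pos; nra).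
    nra. }
  apply Rnot_lt_le. intros Hpos. rewrite Lf_Wq in Hpos.
  assert (HL0 : Lq 0 = Wq (-1) (Xsub y x) (Xsub y x)) by (unfold Lq, D; rewrite HA0, HB0; auto).
  assert (Hc : forall t, t >= 0 -> rcont Lq t) by (intros; eapply rderiv_cont; eauto).
  assert (Hpos' : forall T, 0 <= T -> Lq T > 0).
  { intros T HT. apply Rnot_le_lt. intros HLT.
    destruct (first_crossing Lq T ltac:(intros; apply Hc; lra) ltac:(lra) HT HLT) as [ts [Hts [Hts0 Hbef]]].
    pose proof (gronwall_ge Lq Lq' (2 * c1) ts ltac:(lra) ltac:(lra)) as G.
    assert (Lq ts >= Lq 0 * exp (2 * c1 * ts)).
    { apply G. intros; apply rderiv_derivable; [lra|apply HLr; lra].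
      intros t Ht. apply HLge. lra. destruct (Req_dec t ts). subst; lra. specialize (Hbef t ltac:(lra)); lra.
      apply Hc; lra. }
    pose proof (exp_pos (2 * c1 * ts)). nra. }
  assert (Hgrow : forall T, 0 <= T -> Lq T >= Lq 0 * exp (2 * c1 * T)).
  { intros T HT. apply (gronwall_ge Lq Lq'); auto. lra. intros; apply rderiv_derivable; [lra|apply HLr; lra].
    intros t Ht. apply HLge. lra. specialize (Hpos' t ltac:(lra)); lra. apply Hc; lra. }
  assert (Hbd : forall T, 0 <= T -> Lq T <= d * d).
  { intros T HT. pose proof (Hpos' T HT).
    assert (Hcc : Ccone (pA T) (pB T)). { unfold Ccone. rewrite Lf_Wq, Wq_negsub. fold (D T). unfold Lq in H. lra. }
    destruct (Hcone (pA T) (pB T) (HGU _ (HAG T ltac:(lra))) Hcc (HGU _ (HBG T ltac:(lra)))) as [Hb1 _].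
    unfold Lq. rewrite Wqm_vn. unfold D; simpl. pose proof (vnorm_pos _ (vsub (fst (pB T)) (fst (pA T)))).
    pose proof (vnorm_pos _ (vsub (snd (pB T)) (snd (pA T)))). nra. }
  set (T := d * d / (2 * c1 * Lq 0)).
  assert (HT : 0 <= T) by (unfold T; apply Rmult_le_pos; [nra|left; apply Rinv_0_lt_compat; nra]).
  pose proof (Hgrow T HT). pose proof (Hbd T HT). pose proof (exp_ge1 (2 * c1 * T)).
  assert (2 * c1 * T * Lq 0 = d * d) by (unfold T; field; lra). nra. Qed.

Hypothesis HUopen : is_open U.
Hypothesis Hfac : mcont_on U fa.
Hypothesis Hfzc : mcont_on U fz.
Hypothesis Hgac : mcont_on U ga.
Hypothesis Hgzc : mcont_on U gz.

Definition JS (x : X n m) : R := msum (fa x) + msum (fz x) + msum (ga x) + msum (gz x).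
Definition JD (x y : X n m) : R := msum (msub (fa x) (fa y)) + msum (msub (fz x) (fz y)) + msum (msub (ga x) (ga y)) + msum (msub (gz x) (gz y)).

Lemma JD_pos x y : 0 <= JD x y.
Proof. unfold JD. pose proof (msum_pos _ _ (msub (fa x) (fa y))). pose proof (msum_pos _ _ (msub (fz x) (fz y))).
  pose proof (msum_pos _ _ (msub (ga x) (ga y))). pose proof (msum_pos _ _ (msub (gz x) (gz y))). lra. Qed.
Lemma JD_sym x y : JD x y = JD y x.
Proof. unfold JD. rewrite (msum_msub_sym _ _ (fa x)), (msum_msub_sym _ _ (fz x)), (msum_msub_sym _ _ (ga x)), (msum_msub_sym _ _ (gz x)). auto. Qed.
Lemma JD_tri x y z : JD x z <= JD x y + JD y z.
Proof. unfold JD. pose proof (msum_tri _ _ (fa x) (fa y) (fa z)). pose proof (msum_tri _ _ (fz x) (fz y) (fz z)).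
  pose proof (msum_tri _ _ (ga x) (ga y) (ga z)). pose proof (msum_tri _ _ (gz x) (gz y) (gz z)). lra. Qed.
Lemma JS_le x y : JS x <= JS y + JD x y.
Proof. unfold JS, JD. pose proof (msum_le _ _ (fa x) (fa y)). pose proof (msum_le _ _ (fz x) (fz y)).
  pose proof (msum_le _ _ (ga x) (ga y)). pose proof (msum_le _ _ (gz x) (gz y)). lra. Qed.
Lemma JS_pos x : 0 <= JS x.
Proof. unfold JS. pose proof (msum_pos _ _ (fa x)). pose proof (msum_pos _ _ (fz x)). pose proof (msum_pos _ _ (ga x)). pose proof (msum_pos _ _ (gz x)). lra. Qed.
Lemma DFap_bound x v : Xnorm (DFap x v) <= JS x * Xnorm v.
Proof. apply Blk_bound. Qed.
Lemma DFap_diff x y v : Xnorm (Xsub (DFap x v) (DFap y v)) <= JD x y * Xnorm v.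
Proof. unfold DFap. rewrite Blk_sub. apply Blk_bound. Qed.

Lemma msum_cont k l (M : X n m -> mat k l) : mcont_on U M -> forall x, U x -> forall eta, eta > 0 ->
  exists del, del > 0 /\ forall y, U y -> Xnorm (Xsub y x) < del -> msum (msub (M y) (M x)) < eta.
Proof. intros HM x Hx eta Heta. set (e := eta / (INR k * INR l + 1)).
  assert (He : e > 0) by (apply Rdiv_lt_0_compat; [lra|pose proof (pos_INR k); pose proof (pos_INR l); nra]).
  destruct (fin_delta k (fun i del => forall y, U y -> Xnorm (Xsub y x) < del -> forall j, Rabs (M y i j - M x i j) < e)) as [del [Hdel H]].
  { intros i d1 d2 H1 H2 y Hy Hyx. apply H1; auto. lra. }
  { intros i. destruct (fin_delta l (fun j del => forall y, U y -> Xnorm (Xsub y x) < del -> Rabs (M y i j - M x i j) < e)) as [del [Hdel H]].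
    { intros j d1 d2 H1 H2 y Hy Hyx. apply H1; auto. lra. }
    { intros j. destruct (HM i j x Hx e He) as [del [Hdel H]]. exists del. split; auto. }
    exists del. split; auto. }
  exists del. split; auto. intros y Hy Hyx. unfold msum, msub.
  apply Rle_lt_trans with (vsum k (fun _ => vsum l (fun _ => e))).
  { apply vsum_le; intros i. apply vsum_le; intros j. left. apply H; auto. }
  rewrite vsum_const, vsum_const.
  assert (e * (INR k * INR l + 1) = eta) by (unfold e; field; pose proof (pos_INR k); pose proof (pos_INR l); nra).
  nra. Qed.

Lemma JD_cont x : U x -> forall eta, eta > 0 ->
  exists del, del > 0 /\ forall y, U y -> Xnorm (Xsub y x) < del -> JD y x < eta.
Proof. intros Hx eta Heta.
  destruct (msum_cont _ _ fa Hfac x Hx (eta/4) ltac:(lra)) as [d1 [Hd1 K1]].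
  destruct (msum_cont _ _ fz Hfzc x Hx (eta/4) ltac:(lra)) as [d2 [Hd2 K2]].
  destruct (msum_cont _ _ ga Hgac x Hx (eta/4) ltac:(lra)) as [d3 [Hd3 K3]].
  destruct (msum_cont _ _ gz Hgzc x Hx (eta/4) ltac:(lra)) as [d4 [Hd4 K4]].
  exists (Rmin (Rmin d1 d2) (Rmin d3 d4)). split. repeat apply Rmin_pos; auto.
  intros y Hy Hyx. pose proof (Rmin_l (Rmin d1 d2) (Rmin d3 d4)). pose proof (Rmin_r (Rmin d1 d2) (Rmin d3 d4)).
  pose proof (Rmin_l d1 d2). pose proof (Rmin_r d1 d2). pose proof (Rmin_l d3 d4). pose proof (Rmin_r d3 d4).
  unfold JD. specialize (K1 y Hy ltac:(lra)). specialize (K2 y Hy ltac:(lra)). specialize (K3 y Hy ltac:(lra)). specialize (K4 y Hy ltac:(lra)). lra. Qed.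

Section Tube.
Variable phi0 : R -> X n m.
Hypothesis Hp0d : forall t, t >= 0 -> curve_deriv phi0 t (F (phi0 t)).
Hypothesis Hp0U : forall t, t >= 0 -> U (phi0 t).

Lemma tube T eta : 0 <= T -> eta > 0 -> exists del, del > 0 /\ forall s, 0 <= s <= T -> forall x,
  Xnorm (Xsub x (phi0 s)) < del -> U x /\ JD x (phi0 s) < eta.
Proof. intros HT Heta.
  apply (compact_cover (fun s del => forall x, Xnorm (Xsub x (phi0 s)) < del -> U x /\ JD x (phi0 s) < eta) T HT).
  { intros s d1 d2 H1 H2 x Hx. apply H1. lra. }
  intros t Ht. pose proof (Hp0U t ltac:(lra)) as Ut.
  destruct (HUopen _ Ut) as [r [Hr Hr1]].
  destruct (JD_cont _ Ut (eta/2) ltac:(lra)) as [rho [Hrho Hrho1]].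
  set (r' := Rmin r rho). assert (Hr' : r' > 0) by (apply Rmin_pos; lra).
  pose proof (Rmin_l r rho). pose proof (Rmin_r r rho). fold r' in H, H0.
  destruct (curve_cont _ _ phi0 t _ (Hp0d t ltac:(lra)) (r'/2) ltac:(lra)) as [dc [Hdc Hdc1]].
  exists (Rmin dc (r'/2)). split. apply Rmin_pos; lra.
  intros s Hs Hst x Hx. pose proof (Rmin_l dc (r'/2)). pose proof (Rmin_r dc (r'/2)).
  specialize (Hdc1 s ltac:(lra) ltac:(lra)).
  assert (Hxt : Xnorm (Xsub x (phi0 t)) < r') by (pose proof (Xnorm_tri _ _ x (phi0 s) (phi0 t)); lra).
  assert (Ux : U x) by (apply Hr1; lra). split; auto.
  pose proof (Hrho1 x Ux ltac:(lra)). pose proof (Hrho1 (phi0 s) (Hp0U s ltac:(lra)) ltac:(lra)).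
  pose proof (JD_tri x (phi0 t) (phi0 s)) as Htri. rewrite (JD_sym (phi0 t) (phi0 s)) in Htri. lra. Qed.

Lemma tube_bound T : 0 <= T -> exists M, M >= 0 /\ forall s, 0 <= s <= T -> JS (phi0 s) <= M.
Proof. intros HT.
  destruct (compact_cover (fun s del => JS (phi0 s) <= / del) T HT) as [del [Hdel H]].
  { intros s d1 d2 H1 H2. eapply Rle_trans. apply H1. apply Rinv_le_contravar; lra. }
  { intros t Ht. pose proof (Hp0U t ltac:(lra)) as Ut.
    destruct (JD_cont _ Ut 1 ltac:(lra)) as [rho [Hrho Hrho1]].
    destruct (curve_cont _ _ phi0 t _ (Hp0d t ltac:(lra)) rho Hrho) as [dc [Hdc Hdc1]].
    pose proof (JS_pos (phi0 t)).
    exists (Rmin dc (/ (JS (phi0 t) + 1))). split. apply Rmin_pos; auto. apply Rinv_0_lt_compat; lra.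
    intros s Hs Hst. pose proof (Rmin_l dc (/ (JS (phi0 t) + 1))). pose proof (Rmin_r dc (/ (JS (phi0 t) + 1))).
    pose proof (Hrho1 (phi0 s) (Hp0U s ltac:(lra)) (Hdc1 s ltac:(lra) ltac:(lra))).
    pose proof (JS_le (phi0 s) (phi0 t)).
    assert (JS (phi0 t) + 1 <= / Rmin dc (/ (JS (phi0 t) + 1))).
    { rewrite <- (Rinv_inv (JS (phi0 t) + 1)) at 1. apply Rinv_le_contravar. apply Rmin_pos; auto. apply Rinv_0_lt_compat; lra. auto. }
    lra. }
  exists (/ del). split. left; apply Rinv_0_lt_compat; lra. auto. Qed.

Lemma seg_sub x y s : Xsub (seg x y s) x = Xscale s (Xsub y x).
Proof. unfold seg; Xext. Qed.

Lemma exp_mono a b : a <= b -> exp a <= exp b.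
Proof. intros H. destruct (Req_dec a b). subst; lra. left; apply exp_increasing; lra. Qed.

Lemma pair_bound T del0 K (B : R -> X n m) : 0 <= T -> del0 > 0 -> K >= 0 ->
  (forall s, 0 <= s <= T -> forall x, Xnorm (Xsub x (phi0 s)) < del0 -> U x /\ JS x <= K) ->
  (forall t, t >= 0 -> curve_deriv B t (F (B t))) ->
  Wq 1 (Xsub (B 0) (phi0 0)) (Xsub (B 0) (phi0 0)) * exp (2 * (K + 1) * T) < del0 * del0 / 4 ->
  forall t, 0 <= t <= T -> Wq 1 (Xsub (B t) (phi0 t)) (Xsub (B t) (phi0 t)) <= Wq 1 (Xsub (B 0) (phi0 0)) (Xsub (B 0) (phi0 0)) * exp (2 * (K + 1) * t).
Proof. intros HT Hdel HK Htube HB Hsmall. assert (Hdd0 : 0 < del0 * del0) by nra.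
  set (D := fun t => Xsub (B t) (phi0 t)).
  set (psi := fun t => Wq 1 (D t) (D t)).
  set (psi' := fun t => 2 * Wq 1 (D t) (Xsub (F (B t)) (F (phi0 t)))).
  assert (Hr : forall t, t >= 0 -> rderiv psi t (psi' t)).
  { intros t Ht. apply Wq_rderiv. lra. apply curve_sub; auto. }
  assert (Hc : forall t, t >= 0 -> rcont psi t) by (intros; eapply rderiv_cont; eauto).
  assert (Hps : forall t, 0 <= psi t) by (intros; unfold psi; rewrite <- Xnorm_sq; apply Rle_0_sqr).
  set (Kt := 2 * (K + 1)).
  assert (Hder : forall t, 0 <= t <= T -> psi t < del0 * del0 -> psi' t <= Kt * psi t).
  { intros t Ht Hpt. unfold psi in Hpt. rewrite <- Xnorm_sq in Hpt.
    assert (HDn : Xnorm (D t) < del0) by (pose proof (Xnorm_pos _ _ (D t)); nra).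
    assert (Hseg : forall s, 0 <= s <= 1 -> Xnorm (Xsub (seg (phi0 t) (B t) s) (phi0 t)) < del0).
    { intros s Hs. rewrite seg_sub, Xnorm_scale, Rabs_pos_eq by lra. fold (D t). pose proof (Xnorm_pos _ _ (D t)). nra. }
    destruct (seg_MVT (phi0 t) (B t) (D t)) as [s [Hs Hs1]].
    { intros s Hs. apply (Htube t Ht). auto. }
    unfold psi'. rewrite Hs1. fold (D t).
    destruct (Htube t Ht _ (Hseg s Hs)) as [_ HJS].
    pose proof (Wq_cs' _ _ 1 (D t) (DFap (seg (phi0 t) (B t) s) (D t)) ltac:(lra)).
    pose proof (DFap_bound (seg (phi0 t) (B t) s) (D t)). pose proof (Xnorm_pos _ _ (D t)).
    pose proof (JS_pos (seg (phi0 t) (B t) s)).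
    unfold psi. rewrite <- Xnorm_sq. unfold Kt.
    assert (Xnorm (D t) * Xnorm (DFap (seg (phi0 t) (B t) s) (D t)) <= K * (Xnorm (D t) * Xnorm (D t))).
    { apply Rle_trans with (Xnorm (D t) * (JS (seg (phi0 t) (B t) s) * Xnorm (D t))). apply Rmult_le_compat_l; lra.
      apply Rle_trans with (Xnorm (D t) * (K * Xnorm (D t))). apply Rmult_le_compat_l; [lra|]. apply Rmult_le_compat_r; lra. lra. }
    nra. }
  assert (HKt : Kt > 0) by (unfold Kt; lra).
  assert (Hexp : forall t, 0 <= t <= T -> psi 0 * exp (Kt * t) <= psi 0 * exp (Kt * T)).
  { intros t Ht. apply Rmult_le_compat_l. apply Hps. apply exp_mono. apply Rmult_le_compat_l; lra. }
  assert (Hlt : forall t, 0 <= t <= T -> psi t < del0 * del0 / 4).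
  { intros t Ht. apply Rnot_le_lt. intros Hle.
    destruct (first_crossing (fun r => del0 * del0 / 4 - psi r) t) as [ts [Hts [Hts0 Hbef]]].
    { intros r Hrr eps Heps. destruct (Hc r ltac:(lra) eps Heps) as [dd [Hdd Hdd1]]. exists dd. split; auto.
      intros s0 Hs0 Hs0r. specialize (Hdd1 s0 Hs0 Hs0r). replace (del0 * del0 / 4 - psi s0 - (del0 * del0 / 4 - psi r)) with (- (psi s0 - psi r)) by ring.
      rewrite Rabs_Ropp; auto. }
    { simpl. pose proof (Hexp 0 ltac:(lra)). rewrite Rmult_0_r, exp_0 in H. change (psi 0 * exp (Kt * T) < del0 * del0 / 4) in Hsmall. lra. }
    { lra. } { simpl. lra. }
    simpl in Hts0.
    assert (psi ts <= (psi 0 + 0 / Kt) * exp (Kt * ts) - 0 / Kt).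
    { apply (gronwall_le psi psi' Kt 0 ts HKt ltac:(lra) ltac:(lra)).
      intros; apply rderiv_derivable; [lra|apply Hr; lra].
      intros r Hr0. rewrite Rplus_0_r. apply Hder. lra. destruct (Req_dec r ts). subst r; lra. specialize (Hbef r ltac:(lra)). simpl in Hbef. lra.
      apply Hc; lra. }
    unfold Rdiv in H. rewrite Rmult_0_l, Rplus_0_r, Rminus_0_r in H. pose proof (Hexp ts ltac:(lra)).
    change (psi 0 * exp (Kt * T) < del0 * del0 / 4) in Hsmall. lra. }
  intros t Ht.
  assert (psi t <= (psi 0 + 0 / Kt) * exp (Kt * t) - 0 / Kt).
  { apply (gronwall_le psi psi' Kt 0 t HKt ltac:(lra) ltac:(lra)).
    intros; apply rderiv_derivable; [lra|apply Hr; lra].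
    intros r Hr0. rewrite Rplus_0_r. apply Hder. lra. pose proof (Hlt r ltac:(lra)). nra.
    apply Hc; lra. }
  unfold Rdiv in H. rewrite Rmult_0_l, Rplus_0_r, Rminus_0_r in H. unfold psi, D, Kt in H. auto. Qed.

Lemma Wq_lin_id P A xi Dv yv c : Wq 1 P (DFap xi Dv) - c * Wq 1 P (DFap A yv) =
  Wq 1 P (Xsub (DFap xi Dv) (DFap A Dv)) + Wq 1 P (DFap A (Xsub Dv (Xscale c yv))).
Proof. unfold DFap. rewrite Blk_subv, Blk_scale, !Wq_subr, Wq_scaler. ring. Qed.

Lemma lin_est T del K eta Cd c (B y : R -> X n m) : 0 <= T -> K >= 0 -> eta > 0 -> Cd >= 0 ->
  (forall s, 0 <= s <= T -> forall x, Xnorm (Xsub x (phi0 s)) < del -> U x /\ JD x (phi0 s) < eta) ->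
  (forall s, 0 <= s <= T -> JS (phi0 s) <= K) ->
  (forall t, t >= 0 -> curve_deriv B t (F (B t))) ->
  (forall t, t >= 0 -> curve_deriv y t (DFap (phi0 t) (y t))) ->
  (forall s, 0 <= s <= T -> Xnorm (Xsub (B s) (phi0 s)) < del /\ Xnorm (Xsub (B s) (phi0 s)) <= Cd) ->
  let E := fun t => Xsub (Xsub (B t) (phi0 t)) (Xscale c (y t)) in
  Wq 1 (E T) (E T) <= (Wq 1 (E 0) (E 0) + eta * eta * (Cd * Cd) / (2 * K + 1)) * exp ((2 * K + 1) * T).
Proof. intros HT HK Heta HCd Htube HKb HB Hy HD E.
  set (D := fun t => Xsub (B t) (phi0 t)).
  set (E' := fun t => Xsub (Xsub (F (B t)) (F (phi0 t))) (Xscale c (DFap (phi0 t) (y t)))).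
  assert (HEd : forall t, t >= 0 -> curve_deriv E t (E' t)).
  { intros t Ht. apply curve_subsc; [apply curve_sub|]; auto. }
  set (psi := fun t => Wq 1 (E t) (E t)).
  set (psi' := fun t => 2 * Wq 1 (E t) (E' t)).
  assert (Hr : forall t, t >= 0 -> rderiv psi t (psi' t)) by (intros; apply Wq_rderiv; auto; lra).
  set (Kt := 2 * K + 1). set (b := eta * eta * (Cd * Cd)).
  assert (HKt : Kt > 0) by (unfold Kt; lra). assert (Hb : 0 <= b) by (unfold b; nra).
  assert (psi T <= (psi 0 + b / Kt) * exp (Kt * T) - b / Kt).
  { apply (gronwall_le psi psi' Kt b T HKt Hb HT).
    - intros; apply rderiv_derivable; [lra|apply Hr; lra].
    - intros t Ht. destruct (HD t ltac:(lra)) as [HD1 HD2]. fold (D t) in HD1, HD2.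
      assert (Hseg : forall s, 0 <= s <= 1 -> Xnorm (Xsub (seg (phi0 t) (B t) s) (phi0 t)) < del).
      { intros s Hs. rewrite seg_sub, Xnorm_scale, Rabs_pos_eq by lra. fold (D t). pose proof (Xnorm_pos _ _ (D t)). nra. }
      destruct (seg_MVT (phi0 t) (B t) (E t)) as [s [Hs Hs1]].
      { intros s Hs. apply (Htube t ltac:(lra)). auto. }
      set (xi := seg (phi0 t) (B t) s) in *. fold (D t) in Hs1.
      destruct (Htube t ltac:(lra) xi (Hseg s Hs)) as [_ HJD].
      assert (Hid : Wq 1 (E t) (E' t) = Wq 1 (E t) (Xsub (DFap xi (D t)) (DFap (phi0 t) (D t))) + Wq 1 (E t) (DFap (phi0 t) (E t))).
      { unfold E'. rewrite Wq_subr, Wq_scaler, Hs1, Wq_lin_id. reflexivity. }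
      unfold psi'. rewrite Hid.
      pose proof (Wq_cs' _ _ 1 (E t) (Xsub (DFap xi (D t)) (DFap (phi0 t) (D t))) ltac:(lra)).
      pose proof (Wq_cs' _ _ 1 (E t) (DFap (phi0 t) (E t)) ltac:(lra)).
      pose proof (DFap_diff xi (phi0 t) (D t)). pose proof (DFap_bound (phi0 t) (E t)).
      pose proof (HKb t ltac:(lra)). pose proof (JD_pos xi (phi0 t)). pose proof (JS_pos (phi0 t)).
      pose proof (Xnorm_pos _ _ (E t)). pose proof (Xnorm_pos _ _ (D t)).
      set (nE := Xnorm (E t)) in *.
      assert (Xnorm (Xsub (DFap xi (D t)) (DFap (phi0 t) (D t))) <= eta * Cd).
      { eapply Rle_trans. apply H1. apply Rmult_le_compat; lra. }
      assert (Xnorm (DFap (phi0 t) (E t)) <= K * nE).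
      { eapply Rle_trans. apply H2. apply Rmult_le_compat_r; lra. }
      unfold psi. rewrite <- Xnorm_sq. fold nE. unfold Kt, b.
      assert (nE * Xnorm (Xsub (DFap xi (D t)) (DFap (phi0 t) (D t))) <= nE * (eta * Cd)) by (apply Rmult_le_compat_l; lra).
      assert (nE * Xnorm (DFap (phi0 t) (E t)) <= nE * (K * nE)) by (apply Rmult_le_compat_l; lra).
      pose proof (Rle_0_sqr (nE - eta * Cd)). unfold Rsqr in *. nra.
    - eapply rderiv_cont. apply Hr. lra. }
  pose proof (exp_pos (Kt * T)). assert (0 <= b / Kt) by (apply Rmult_le_pos; [lra|left; apply Rinv_0_lt_compat; lra]).
  unfold psi, Kt, b in *. lra. Qed.

End Tube.

Lemma Xsub_zero_eq (a b : X n m) : Xsub a b = Xzero -> a = b.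
Proof. intros H0. replace a with (Xadd b (Xsub a b)) by Xext. rewrite H0. Xext. Qed.
Lemma Wq_diff s (u Y : X n m) : Wq s u u - Wq s Y Y = Wq s (Xsub u Y) (Xsub u Y) + 2 * Wq s Y (Xsub u Y).
Proof. rewrite !Wq_subl, !Wq_subr. rewrite (Wq_sym _ _ _ Y u). ring. Qed.
Lemma posnbhd (Y : X n m) : Wq (-1) Y Y > 0 -> exists rho, rho > 0 /\ forall u, Xnorm (Xsub u Y) < rho -> Wq (-1) u u > 0.
Proof. intros HY. pose proof (Xnorm_pos _ _ Y).
  exists (Rmin 1 (Wq (-1) Y Y / (2 * (2 * Xnorm Y + 1)))). split. apply Rmin_pos. lra. apply Rdiv_lt_0_compat; lra.
  intros u Hu. pose proof (Rmin_l 1 (Wq (-1) Y Y / (2 * (2 * Xnorm Y + 1)))). pose proof (Rmin_r 1 (Wq (-1) Y Y / (2 * (2 * Xnorm Y + 1)))).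
  set (e := Xsub u Y) in *. pose proof (Xnorm_pos _ _ e).
  pose proof (Wq_diff (-1) u Y). fold e in H3.
  pose proof (Wq_cs'' _ _ (-1) e e ltac:(lra)). pose proof (Wq_cs'' _ _ (-1) Y e ltac:(lra)).
  assert (Xnorm e * (2 * Xnorm Y + 1) <= Wq (-1) Y Y / 2).
  { apply Rle_trans with (Wq (-1) Y Y / (2 * (2 * Xnorm Y + 1)) * (2 * Xnorm Y + 1)). apply Rmult_le_compat_r; lra.
    right; field; lra. }
  assert (Xnorm e * Xnorm e <= Xnorm e) by nra. nra. Qed.

Lemma tube_JS phi0 (Hp0d : forall t, t >= 0 -> curve_deriv phi0 t (F (phi0 t))) (Hp0U : forall t, t >= 0 -> U (phi0 t)) T :
  0 <= T -> exists del0 K, del0 > 0 /\ K >= 0 /\ forall s, 0 <= s <= T -> forall x, Xnorm (Xsub x (phi0 s)) < del0 -> U x /\ JS x <= K.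
Proof. intros HT. destruct (tube phi0 Hp0d Hp0U T 1 HT ltac:(lra)) as [del [Hdel H1]].
  destruct (tube_bound phi0 Hp0d Hp0U T HT) as [M [HM HM1]].
  exists del, (M + 1). split; auto. split. lra. intros s Hs x Hx. destruct (H1 s Hs x Hx) as [Ux HJ]. split; auto.
  pose proof (JS_le x (phi0 s)). pose proof (HM1 s Hs). lra. Qed.

Variables (h : vec m -> vec n) (HM : X n m -> mat n m).
Hypothesis Hh : forall x : X n m, Gam x <-> ((exists a, U (a, snd x)) /\ fst x = h (snd x)).
Hypothesis HH : forall x, Gam x -> forall v : X n m, in_T f g fa fz ga gz x v <-> fst v = mapply (HM x) (snd v).

Lemma Xsub_self (x : X n m) : Xsub x x = Xzero.
Proof. Xext. Qed.

Lemma main_thm z0 : (exists a, U (a, z0)) -> frechet_deriv h z0 (HM (h z0, z0)).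
Proof.
  intros [a0 Ua0].
  set (x0 := (h z0, z0) : X n m).
  assert (Gx0 : Gam x0) by (apply Hh; simpl; split; [exists a0; auto|auto]).
  destruct (HUopen _ Ua0) as [r [Hr Hr1]].
  assert (Gw : forall w, vnorm w < r -> Gam (h (vadd z0 w), vadd z0 w)).
  { intros w Hw. apply Hh. simpl. split; auto. exists a0. apply Hr1.
    eapply Rle_lt_trans. apply Xnorm_le. unfold Xsub; simpl.
    replace (vsub a0 a0) with (@vzero n) by (vext; ring). replace (vsub (vadd z0 w) z0) with w by (vext; ring).
    rewrite vnorm_vzero. lra. }
  set (H0 := HM x0).
  apply NNPP. intros Hno.
  assert (Hbad : exists eps, eps > 0 /\ forall del, del > 0 -> exists w, vnorm w < del /\ eps * vnorm w < vnorm (vsub (vsub (h (vadd z0 w)) (h z0)) (mapply H0 w))).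
  { apply NNPP. intros Hn2. apply Hno. intros eps Heps. apply NNPP. intros Hn3. apply Hn2. exists eps. split; auto.
    intros del Hdel. apply NNPP. intros Hn4. apply Hn3. exists del. split; auto. intros w Hw. apply Rnot_lt_le. intros Hlt. apply Hn4. exists w. auto. }
  destruct Hbad as [eps [Heps Hbad]].
  set (wk := fun k : nat => epsilon (inhabits (@vzero m)) (fun w => vnorm w < Rmin r (/ (INR k + 1)) /\ eps * vnorm w < vnorm (vsub (vsub (h (vadd z0 w)) (h z0)) (mapply H0 w)))).
  assert (Hwk : forall k, vnorm (wk k) < Rmin r (/ (INR k + 1)) /\ eps * vnorm (wk k) < vnorm (vsub (vsub (h (vadd z0 (wk k))) (h z0)) (mapply H0 (wk k)))).
  { intros k. apply epsilon_spec. apply Hbad. apply Rmin_pos; auto. apply Rinv_0_lt_compat. pose proof (pos_INR k); lra. }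
  set (ck := fun k => vnorm (wk k)).
  assert (Hck : forall k, ck k > 0).
  { intros k. destruct (Hwk k) as [_ H2]. pose proof (vnorm_pos _ (wk k)). destruct (Req_dec (vnorm (wk k)) 0) as [E0|E0]; [|unfold ck; lra].
    exfalso. apply vnorm_zero_vec in E0. rewrite E0 in H2.
    replace (vadd z0 vzero) with z0 in H2 by (vext; ring). rewrite mapply_zero in H2.
    replace (vsub (vsub (h z0) (h z0)) vzero) with (@vzero n) in H2 by (vext; ring). rewrite !vnorm_vzero in H2. lra. }
  set (Xk := fun k => (h (vadd z0 (wk k)), vadd z0 (wk k)) : X n m).
  assert (GXk : forall k, Gam (Xk k)) by (intros k; apply Gw; pose proof (Rmin_l r (/ (INR k + 1))); destruct (Hwk k); lra).
  set (Dk := fun k => Xsub (Xk k) x0).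
  assert (HDsnd : forall k, snd (Dk k) = wk k) by (intros; unfold Dk, Xk, x0, Xsub; simpl; vext; ring).
  assert (HDfst : forall k, vnorm (fst (Dk k)) <= ck k).
  { intros k. pose proof (cone_le x0 (Xk k) Gx0 (GXk k)) as Hc. rewrite Lf_Wq, Wqm_vn in Hc. fold (Dk k) in Hc. rewrite HDsnd in Hc.
    fold (ck k) in Hc. apply le_of_sq. unfold ck; apply vnorm_pos. lra. }
  set (vk := fun k => Xscale (/ ck k) (Dk k)).
  assert (Hvk : forall k, Xnorm (vk k) <= 2).
  { intros k. unfold vk. rewrite Xnorm_scale, Rabs_pos_eq by (left; apply Rinv_0_lt_compat; apply Hck).
    pose proof (Xnorm_le _ _ (Dk k)) as Hl. rewrite HDsnd in Hl. fold (ck k) in Hl. pose proof (HDfst k). pose proof (Hck k).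
    apply Rle_trans with (/ ck k * (2 * ck k)). apply Rmult_le_compat_l. left; apply Rinv_0_lt_compat; lra. lra. right; field; lra. }
  destruct (BWX _ _ vk 2 Hvk) as [vs Hvs].
  assert (Hsndvk : forall k, snd (vk k) = vscale (/ ck k) (wk k)) by (intros k; change (snd (vk k)) with (vscale (/ ck k) (snd (Dk k))); rewrite HDsnd; auto).
  assert (Hng : fst vs <> mapply H0 (snd vs)).
  { intros Heq. pose proof (msum_pos _ _ H0) as HmP. set (rho := eps / (msum H0 + 2)).
    assert (Hrho : rho > 0) by (apply Rdiv_lt_0_compat; lra).
    destruct (Hvs rho Hrho 0%nat) as [k [_ Hk]].
    assert (Hid : vsub (fst (vk k)) (mapply H0 (snd (vk k))) = vscale (/ ck k) (vsub (vsub (h (vadd z0 (wk k))) (h z0)) (mapply H0 (wk k)))).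
    { rewrite Hsndvk, mapply_scale. unfold vk, Dk, Xk, x0, Xscale, Xsub. simpl. vext. ring. }
    assert (Hn1 : vnorm (vsub (fst (vk k)) (mapply H0 (snd (vk k)))) > eps).
    { rewrite Hid, vnorm_scale, Rabs_pos_eq by (left; apply Rinv_0_lt_compat; apply Hck). destruct (Hwk k) as [_ Hw2]. fold (ck k) in Hw2.
      pose proof (Hck k). apply Rmult_lt_reg_l with (ck k); auto. rewrite <- Rmult_assoc, Rinv_r by lra. lra. }
    assert (Hid2 : vsub (fst (vk k)) (mapply H0 (snd (vk k))) = vadd (vsub (fst (vk k)) (fst vs)) (mapply H0 (vsub (snd vs) (snd (vk k))))).
    { rewrite mapply_sub, <- Heq. vext. ring. }
    rewrite Hid2 in Hn1. pose proof (vnorm_add _ (vsub (fst (vk k)) (fst vs)) (mapply H0 (vsub (snd vs) (snd (vk k))))).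
    pose proof (mapply_bound _ _ H0 (vsub (snd vs) (snd (vk k)))).
    pose proof (Xnorm_fst _ _ (Xsub (vk k) vs)) as H4. pose proof (Xnorm_snd _ _ (Xsub vs (vk k))) as H5. rewrite Xnorm_sub_sym in H5.
    change (fst (Xsub (vk k) vs)) with (vsub (fst (vk k)) (fst vs)) in H4.
    change (snd (Xsub vs (vk k))) with (vsub (snd vs) (snd (vk k))) in H5.
    assert (rho * (msum H0 + 2) = eps) by (unfold rho; field; lra).
    assert (msum H0 * vnorm (vsub (snd vs) (snd (vk k))) <= msum H0 * rho) by (apply Rmult_le_compat_l; lra).
    nra. }
  assert (HnT : ~ in_T f g fa fz ga gz x0 vs) by (intros HT; apply Hng; apply (HH x0 Gx0 vs); auto).
  assert (Hex : exists phi' y ts, forward_solution f g x0 phi' /\ y 0 = vs /\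
     (forall t, t >= 0 -> curve_deriv y t (DF_apply fa fz ga gz (phi' t) (y t))) /\ ts >= 0 /\ Lf (y ts) Xzero > 0).
  { apply NNPP; intro Hn; apply HnT; intros phi Hphi y Hy0 Hyd t Ht; apply Rnot_lt_le; intro Hlt; apply Hn; exists phi, y, t; auto 10. }
  destruct Hex as [phi' [y [T [[Hp'0 Hp'd] [Hy0 [Hyd [HT HLf]]]]]]].
  destruct (HGinv x0 Gx0) as [phi0 [[H00 Hp0d] Hp0G]].
  assert (Hp0d' : forall t, t >= 0 -> curve_deriv phi0 t (F (phi0 t))) by exact Hp0d.
  assert (Hp0U : forall t, t >= 0 -> U (phi0 t)) by (intros; apply HGU; apply Hp0G; auto).
  assert (Huniq : forall t, t >= 0 -> phi' t = phi0 t).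
  { intros t Ht. destruct (tube_JS phi0 Hp0d' Hp0U t ltac:(lra)) as [del0 [K [Hd0 [HK Htb]]]].
    assert (Hb := pair_bound phi0 Hp0d' t del0 K phi' ltac:(lra) Hd0 HK Htb Hp'd).
    rewrite Hp'0, H00, Xsub_self, <- Xnorm_sq, Xnorm_Xzero in Hb.
    specialize (Hb ltac:(nra) t ltac:(lra)). rewrite <- Xnorm_sq in Hb.
    assert (Xnorm (Xsub (phi' t) (phi0 t)) = 0) by (pose proof (Xnorm_pos _ _ (Xsub (phi' t) (phi0 t))); nra).
    apply Xsub_zero_eq, Xnorm_zero_eq; auto. }
  assert (Hyd' : forall t, t >= 0 -> curve_deriv y t (DFap (phi0 t) (y t))).
  { intros t Ht. pose proof (Hyd t Ht) as Hc. rewrite Huniq in Hc by auto. exact Hc. }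
  set (Y := y T).
  assert (HY : Wq (-1) Y Y > 0).
  { rewrite Lf_Wq, Wq_negsub in HLf. replace (Xsub (y T) Xzero) with Y in HLf by (unfold Y; Xext). auto. }
  destruct (posnbhd Y HY) as [rho [Hrho Hrho1]].
  destruct (tube_JS phi0 Hp0d' Hp0U T ltac:(lra)) as [del0 [K [Hd0 [HK Htb]]]].
  assert (HKb : forall s, 0 <= s <= T -> JS (phi0 s) <= K).
  { intros s Hs. apply (Htb s Hs). rewrite Xsub_self, Xnorm_Xzero. lra. }
  set (Kt := 2 * (K + 1)).
  set (S := sqrt (2 * exp (Kt * T))).
  assert (HS2 : S * S = 2 * exp (Kt * T)) by (apply sqrt_sqrt; pose proof (exp_pos (Kt * T)); lra).
  assert (HS0 : 0 <= S) by apply sqrt_pos.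
  set (Q := exp ((2 * K + 1) * T)).
  assert (HQ : 1 <= Q) by (unfold Q; apply Rle_trans with (exp 0); [rewrite exp_0; lra|apply exp_mono; nra]).
  set (eta := rho / (2 * (S * Q + 1))).
  assert (Heta : eta > 0) by (apply Rdiv_lt_0_compat; nra).
  destruct (tube phi0 Hp0d' Hp0U T eta ltac:(lra) Heta) as [deta [Hdeta Htube]].
  set (rho' := rho / (2 * Q)). assert (Hrho' : rho' > 0) by (apply Rdiv_lt_0_compat; lra).
  set (ec := Rmin deta (del0 / 2) / (S + 1)).
  assert (Hec : ec > 0) by (apply Rdiv_lt_0_compat; [apply Rmin_pos; lra|lra]).
  destruct (inv_small ec Hec) as [N HN].
  destruct (Hvs rho' Hrho' N) as [k [Hk Hkv]].
  set (c := ck k). assert (Hc0 : c > 0) by apply Hck.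
  assert (Hcs : c < ec) by (eapply Rlt_trans; [|apply (HN k Hk)]; destruct (Hwk k) as [Hw1 _]; pose proof (Rmin_r r (/ (INR k + 1))); unfold c, ck; lra).
  assert (HcS : c * S < Rmin deta (del0 / 2)).
  { apply Rle_lt_trans with (ec * S). apply Rmult_le_compat_r; lra.
    apply Rlt_le_trans with (ec * (S + 1)). apply Rmult_lt_compat_l; lra. right. unfold ec. field. lra. }
  pose proof (Rmin_l deta (del0 / 2)). pose proof (Rmin_r deta (del0 / 2)).
  destruct (HGinv (Xk k) (GXk k)) as [pk [[Hpk0 Hpkd] HpkG]].
  assert (Hpkd' : forall t, t >= 0 -> curve_deriv pk t (F (pk t))) by exact Hpkd.
  assert (HD0 : Wq 1 (Xsub (pk 0) (phi0 0)) (Xsub (pk 0) (phi0 0)) <= 2 * (c * c)).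
  { rewrite Hpk0, H00. fold (Dk k). unfold Wq. rewrite <- !vnorm_sq, HDsnd. fold (ck k) c. pose proof (HDfst k) as Hf1. fold c in Hf1.
    pose proof (vnorm_pos _ (fst (Dk k))). rewrite Rmult_1_l. nra. }
  assert (Hpb := pair_bound phi0 Hp0d' T del0 K pk ltac:(lra) Hd0 HK Htb Hpkd').
  fold Kt in Hpb.
  assert (Hexp : forall t, 0 <= t <= T -> exp (Kt * t) <= exp (Kt * T)) by (intros; apply exp_mono; apply Rmult_le_compat_l; unfold Kt; lra).
  pose proof (Wq_pos := fun x : X n m => eq_ind _ (fun r => 0 <= r) (Rle_0_sqr (Xnorm x)) _ (Xnorm_sq _ _ x)).
  assert (Hsm : Wq 1 (Xsub (pk 0) (phi0 0)) (Xsub (pk 0) (phi0 0)) * exp (Kt * T) < del0 * del0 / 4).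
  { apply Rle_lt_trans with (2 * (c * c) * exp (Kt * T)). apply Rmult_le_compat_r. left; apply exp_pos. auto.
    replace (2 * (c * c) * exp (Kt * T)) with ((c * S) * (c * S)) by (transitivity (c * c * (S * S)); [ring|rewrite HS2; ring]).
    assert (0 <= c * S) by nra. nra. }
  specialize (Hpb Hsm).
  assert (HDs : forall s, 0 <= s <= T -> Xnorm (Xsub (pk s) (phi0 s)) < deta /\ Xnorm (Xsub (pk s) (phi0 s)) <= c * S).
  { intros s Hs. assert (Xnorm (Xsub (pk s) (phi0 s)) <= c * S).
    { apply le_of_sq. nra. rewrite Xnorm_sq. eapply Rle_trans. apply Hpb; auto.
      apply Rle_trans with (2 * (c * c) * exp (Kt * T)).
      apply Rmult_le_compat. apply Wq_pos. left; apply exp_pos. auto. apply Hexp; auto.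
      right. transitivity (c * c * (S * S)); [rewrite HS2; ring|ring]. }
    split; lra. }
  pose proof (lin_est phi0 Hp0d' T deta K eta (c * S) c pk y ltac:(lra) HK Heta ltac:(nra) Htube HKb Hpkd' Hyd' HDs) as Hlin.
  cbv zeta in Hlin. fold Q in Hlin.
  set (ET := Xsub (Xsub (pk T) (phi0 T)) (Xscale c (y T))) in Hlin.
  set (E0 := Xsub (Xsub (pk 0) (phi0 0)) (Xscale c (y 0))) in Hlin.
  assert (HE0 : E0 = Xscale c (Xsub (vk k) vs)).
  { unfold E0. rewrite Hpk0, H00, Hy0. fold (Dk k). unfold vk. fold c.
    unfold Xscale, Xsub; apply injective_projections; simpl; apply functional_extensionality; intros i; unfold vsub, vscale; field; lra. }
  rewrite HE0, Wq_scalel, Wq_scaler, <- Xnorm_sq in Hlin.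
  assert (Hfin : Xnorm ET * Xnorm ET < c * c * (rho * rho)).
  { eapply Rle_lt_trans. apply Hlin.
    pose proof (Xnorm_pos _ _ (Xsub (vk k) vs)).
    assert (Hv2 : Xnorm (Xsub (vk k) vs) * Xnorm (Xsub (vk k) vs) <= rho' * rho') by nra.
    assert (Hdiv : eta * eta * (c * S * (c * S)) / (2 * K + 1) <= eta * eta * (c * S * (c * S))).
    { unfold Rdiv. apply Rle_trans with (eta * eta * (c * S * (c * S)) * 1). 2: lra. apply Rmult_le_compat_l. nra.
      rewrite <- Rinv_1. apply Rinv_le_contravar; lra. }
    assert (Hq1 : rho' * rho' * Q <= rho * rho / 4).
    { unfold rho'. replace (rho / (2 * Q) * (rho / (2 * Q)) * Q) with (rho * rho / 4 / Q) by (field; lra).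
      unfold Rdiv. rewrite Rmult_assoc. apply Rmult_le_compat_l. nra. rewrite <- (Rmult_1_r (/ 4)) at 2.
      apply Rmult_le_compat_l. lra. rewrite <- Rinv_1. apply Rinv_le_contravar; lra. }
    assert (Hq2 : eta * eta * (S * S) * Q <= rho * rho / 4).
    { unfold eta. replace (rho / (2 * (S * Q + 1)) * (rho / (2 * (S * Q + 1))) * (S * S) * Q) with ((rho * rho / 4) * ((S * S * Q) / ((S * Q + 1) * (S * Q + 1)))) by (field; nra).
      rewrite <- (Rmult_1_r (rho * rho / 4)) at 2. apply Rmult_le_compat_l. nra.
      unfold Rdiv. apply Rmult_le_reg_r with ((S * Q + 1) * (S * Q + 1)). nra.
      rewrite Rmult_assoc, Rinv_l by nra. nra. }
    apply Rle_lt_trans with ((c * c * (rho' * rho') + eta * eta * (c * S * (c * S))) * Q).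
    apply Rmult_le_compat_r. lra. assert (0 <= c * c) by nra. rewrite <- Xnorm_sq.
    assert (c * (c * (Xnorm (Xsub (vk k) vs) * Xnorm (Xsub (vk k) vs))) <= c * c * (rho' * rho')) by (rewrite <- Rmult_assoc; apply Rmult_le_compat_l; nra).
    lra.
    replace ((c * c * (rho' * rho') + eta * eta * (c * S * (c * S))) * Q) with (c * c * (rho' * rho' * Q + eta * eta * (S * S) * Q)) by ring.
    apply Rmult_lt_compat_l. nra. nra. }
  assert (HET : Xnorm ET < c * rho).
  { apply Rnot_le_lt. intros Hle. assert (0 <= c * rho) by nra. assert (c * rho * (c * rho) <= Xnorm ET * Xnorm ET) by nra. nra. }
  set (u := Xscale (/ c) (Xsub (pk T) (phi0 T))).
  assert (Hu : Xsub u Y = Xscale (/ c) ET).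
  { unfold u, ET, Y. unfold Xscale, Xsub; apply injective_projections; simpl; apply functional_extensionality; intros i; unfold vsub, vscale; field; lra. }
  assert (Hpos : Wq (-1) u u > 0).
  { apply Hrho1. rewrite Hu, Xnorm_scale, Rabs_pos_eq by (left; apply Rinv_0_lt_compat; lra).
    apply Rmult_lt_reg_l with c; auto. rewrite <- Rmult_assoc, Rinv_r by lra. lra. }
  assert (HDT : Xsub (pk T) (phi0 T) = Xscale c u).
  { unfold u. unfold Xscale, Xsub; apply injective_projections; simpl; apply functional_extensionality; intros i; unfold vsub, vscale; field; lra. }
  pose proof (cone_le (phi0 T) (pk T) (Hp0G T HT) (HpkG T HT)) as Hcl.
  rewrite Lf_Wq, HDT, Wq_scalel, Wq_scaler in Hcl. nra.
Qed.

End Main.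

Theorem lemma2p11 (n m : nat)
  (f : X n m -> vec n) (g : X n m -> vec m)
  (U Gam : X n m -> Prop)
  (* Hypothesis 1 *)
  (HUopen : is_open U) (HUconv : is_convex U)
  (d : R) (Hd : d > 0)
  (Hcone : forall x x', U x -> Ccone x x' -> U x' -> Bbox d x x')
  (* Hypothesis 2: f, g are C^1 on U with partial derivatives fa = D_a f, fz = D_z f,
     ga = D_a g, gz = D_z g *)
  (fa : X n m -> mat n n) (fz : X n m -> mat n m)
  (ga : X n m -> mat m n) (gz : X n m -> mat m m)
  (Hf : forall x, U x -> has_partials f x (fa x) (fz x))
  (Hg : forall x, U x -> has_partials g x (ga x) (gz x))
  (Hfac : mcont_on U fa) (Hfzc : mcont_on U fz)
  (Hgac : mcont_on U ga) (Hgzc : mcont_on U gz)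
  (alpha ell : X n m -> R) (c1 : R)
  (Halc : cont_on U alpha) (Hellc : cont_on U ell)
  (Hal : forall x, U x -> alpha x > 0) (Hell : forall x, U x -> ell x >= 0)
  (Hc1 : c1 > 0)
  (Hfa : forall x, U x -> forall a' : vec n,
     inner a' (mapply (fa x) a') >= alpha x * vnorm a' ^ 2)
  (Hgz : forall x, U x -> forall z' : vec m,
     inner z' (mapply (gz x) z') <= ell x * vnorm z' ^ 2)
  (Hgap : forall x, U x ->
     alpha x >= ell x + opnorm (fz x) + opnorm (ga x) + c1)
  (* Hypothesis 3 *)
  (HGU : forall x, Gam x -> U x)
  (HGinv : pos_invariant f g Gam)
  (HGproj : forall z : vec m, (exists a, Gam (a, z)) <-> (exists a, U (a, z)))
  (* h : K -> R^n with Gamma = graph of h, K = Pi_perp(U) *)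
  (h : vec m -> vec n)
  (Hh : forall x : X n m, Gam x <-> ((exists a, U (a, snd x)) /\ fst x = h (snd x)))
  (* H(x) : the linear map whose graph is T(x), for x in Gamma *)
  (H : X n m -> mat n m)
  (HH : forall x, Gam x -> forall v : X n m,
     in_T f g fa fz ga gz x v <-> fst v = mapply (H x) (snd v)) :
  forall z : vec m, (exists a, U (a, z)) -> frechet_deriv h z (H (h z, z)).
Proof.
  exact (main_thm n m f g U fa fz ga gz Hf Hg Gam alpha ell c1 d HUconv Hcone Hell Hc1 Hfa Hgz Hgap HGU HGinv HUopen Hfac Hfzc Hgac Hgzc h H Hh HH).
Qed.
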